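(* Let $\mathcal B$ be a bigroupoid acting on the right on a groupoid $\mathcal P$, and let $\Lambda\colon\mathcal P\triangleleft\mathcal B\to\mathcal B$ be the canonical strict projection homomorphism. Then the simplicial map $\Lambda_\bullet=N_2(\Lambda)\colon N_2(\mathcal P\triangleleft\mathcal B)\to N_2(\mathcal B)$ is an exact fibration in every dimension $n\ge2$.
   Context: A bigroupoid is a bicategory in which every 2-cell is invertible and every 1-cell is an equivalence. Let $\mathcal B$ be a bicategory with set of objects $B_0$, horizontal composition $\circ$, identity 1-cells $i_x$, associator $\alpha_{h,g,f}\colon(h\circ g)\circ f\Rightarrow h\circ(g\circ f)$, and unitors $\lambda_f\colon i_y\circ f\Rightarrow f$, $\rho_f\colon f\circ i_x\Rightarrow f$ for $f\colon x\to y$. Let $\mathcal B_1$ be the category whose objects are the 1-cells and whose morphisms are the 2-cells of $\mathcal B$ (under vertical composition), with source and target functors $D_1,D_0\colon\mathcal B_1\to B_0$ ($B_0$ viewed as a discrete category). In any category, composition of morphisms is written by juxtaposition. A right action of $\mathcal B$ on a category $\mathcal C$ consists of: a functor $\Lambda\colon\mathcal C\to B_0$ (the momentum); a functor $A\colon\mathcal C\times_{B_0}\mathcal B_1\to\mathcal C$, written $(p,f)\mapsto p\triangleleft f$ and $(a,\phi)\mapsto a\triangleleft\phi$, defined on pairs with $\Lambda(p)=D_0(f)$ (the target of $f$), such that $\Lambda(p\triangleleft f)=D_1(f)$ (the source of $f$); a natural isomorphism with components $\kappa_{p,f,g}\colon(p\triangleleft f)\triangleleft g\to p\triangleleft(f\circ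 g)$ (whenever $p\triangleleft f$ and $f\circ g$ are defined); and a natural isomorphism with components $\iota_p\colon p\triangleleft i_{\Lambda(p)}\to p$; such that (i) $(p\triangleleft\alpha_{f,g,h})\,\kappa_{p,f\circ g,h}\,(\kappa_{p,f,g}\triangleleft h)=\kappa_{p,f,g\circ h}\,\kappa_{p\triangleleft f,g,h}$ for all composable $p,f,g,h$; (ii) $(p\triangleleft\lambda_f)\,\kappa_{p,i_{\Lambda(p)},f}=\iota_p\triangleleft f$; (iii) $(p\triangleleft\rho_f)\,\kappa_{p,f,i_x}=\iota_{p\triangleleft f}$ where $x$ is the source of $f$. The action bicategory $\mathcal P\triangleleft\mathcal B$ of a right action on $\mathcal P$ has: objects the objects of $\mathcal P$; 1-cells $q\to p$ the pairs $(\psi,h)$ with $h\colon\Lambda(q)\to\Lambda(p)$ a 1-cell of $\mathcal B$ and $\psi\colon q\to p\triangleleft h$ in $\mathcal P$; 2-cells $\gamma\colon(\psi,h)\Rightarrow(\xi,l)$ the 2-cells $\gamma\colon h\Rightarrow l$ of $\mathcal B$ with $(p\triangleleft\gamma)\psi=\xi$; vertical composition and horizontal composition of 2-cells as in $\mathcal B$; composite of 1-cells $(\psi,h)\circ(\phi,g)=(\kappa_{p,h,g}(\psi\triangleleft g)\phi,\ h\circ g)$; identity 1-cell $(\iota_p^{-1},i_{\Lambda(p)})$; associator $\alpha_{h,g,f}$ and unitors $\lambda_h,\rho_h$ taken from $\mathcal B$. The canonical projection $\Lambda\colon\mathcal P\triangleleft\mathcal B\to\mathcal B$ is $p\mapsto\Lambda(p)$,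 $(\psi,h)\mapsto h$, $\gamma\mapsto\gamma$. The Duskin nerve $N_2(\mathcal C)$ of a bicategory $\mathcal C$ is the simplicial set with $N_2(\mathcal C)_n$ the set of normal (strictly unital) homomorphisms from $[n]$, regarded as a locally discrete 2-category (the poset $\{0<\dots<n\}$ with only identity 2-cells), to $\mathcal C$, with simplicial operators given by precomposition; a strict homomorphism acts by postcomposition. For a simplicial set $Y_\bullet$, the set of $k$-horns in dimension $n$ is $\bigwedge^k_n(Y_\bullet)=\{(y_0,\dots,y_{k-1},y_{k+1},\dots,y_n)\in Y_{n-1}^{n}\mid d_i(y_j)=d_{j-1}(y_i)\text{ for } i<j,\ i,j\neq k\}$, with horn map $p^k_n(y)=(d_0y,\dots,\widehat{d_ky},\dots,d_ny)$. A simplicial map $f_\bullet\colon E_\bullet\to Y_\bullet$ is an exact fibration in dimension $n$ if for every $0\le k\le n$ the square formed by $f_n\colon E_n\to Y_n$, the horn maps $p^k_n$, and the induced map $\bigwedge^k_n(E_\bullet)\to\bigwedge^k_n(Y_\bullet)$ is a pullback, i.e. the map $E_n\to\bigwedge^k_n(E_\bullet)\times_{\bigwedge^k_n(Y_\bullet)}Y_n$ is a bijection. *)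

(* Defs.v *)
From Stdlib Require Import ProofIrrelevance.
From mathcomp Require Import all_boot.
Set Implicit Arguments.
Unset Strict Implicit.
Unset Printing Implicit Defensive.

(* Bicategories (data + axioms).  Composition [comp1 g f] is "g after f"
   (written g o f in the paper); [vcomp b a] is "b after a" (juxtaposition
   b a in the paper).                                                   *)
Record BicatData := {
  ob : Type;
  hom : ob -> ob -> Type;
  cell : forall x y : ob, hom x y -> hom x y -> Type;
  id1 : forall x : ob, hom x x;
  comp1 : forall x y z : ob, hom y z -> hom x y -> hom x z;
  id2 : forall (x y : ob) (f : hom x y), cell f f;
  vcomp : forall (x y : ob) (f g h : hom x y), cell g h -> cell f g -> cell f h;
  hcomp2 : forall (x y z : ob) (f f' : hom x y) (g g' : hom y z),
      cell g g' -> cell f f' -> cell (comp1 g f) (comp1 g' f');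
  assoc : forall (w x y z : ob) (h : hom y z) (g : hom x y) (f : hom w x),
      cell (comp1 (comp1 h g) f) (comp1 h (comp1 g f));
  lunit : forall (x y : ob) (f : hom x y), cell (comp1 (id1 y) f) f;
  runit : forall (x y : ob) (f : hom x y), cell (comp1 f (id1 x)) f }.

Arguments hom {b} x y.
Arguments cell {b x y} f g.
Arguments id1 {b} x.
Arguments comp1 {b x y z} g f.
Arguments id2 {b x y} f.
Arguments vcomp {b x y f g h} _ _.
Arguments hcomp2 {b x y z f f' g g'} _ _.
Arguments assoc {b w x y z} h g f.
Arguments lunit {b x y} f.
Arguments runit {b x y} f.

Definition isoc (B : BicatData) (x y : ob B) (f g : hom x y) (a : cell f g) : Prop :=
  exists b : cell g f, vcomp b a = id2 f /\ vcomp a b = id2 g.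

Record BicatAxioms (B : BicatData) : Prop := {
  v_assoc : forall (x y : ob B) (f g h k : hom x y)
      (c : cell h k) (b : cell g h) (a : cell f g),
      vcomp c (vcomp b a) = vcomp (vcomp c b) a;
  v_idl : forall (x y : ob B) (f g : hom x y) (a : cell f g), vcomp (id2 g) a = a;
  v_idr : forall (x y : ob B) (f g : hom x y) (a : cell f g), vcomp a (id2 f) = a;
  h_id : forall (x y z : ob B) (f : hom x y) (g : hom y z),
      hcomp2 (id2 g) (id2 f) = id2 (comp1 g f);
  h_interchange : forall (x y z : ob B) (f f' f'' : hom x y) (g g' g'' : hom y z)
      (a : cell f f') (a' : cell f' f'') (b : cell g g') (b' : cell g' g''),
      hcomp2 (vcomp b' b) (vcomp a' a) = vcomp (hcomp2 b' a') (hcomp2 b a);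
  assoc_nat : forall (w x y z : ob B) (f f' : hom w x) (g g' : hom x y) (h h' : hom y z)
      (a : cell f f') (b : cell g g') (c : cell h h'),
      vcomp (assoc h' g' f') (hcomp2 (hcomp2 c b) a)
      = vcomp (hcomp2 c (hcomp2 b a)) (assoc h g f);
  lunit_nat : forall (x y : ob B) (f f' : hom x y) (a : cell f f'),
      vcomp (lunit f') (hcomp2 (id2 (id1 y)) a) = vcomp a (lunit f);
  runit_nat : forall (x y : ob B) (f f' : hom x y) (a : cell f f'),
      vcomp (runit f') (hcomp2 a (id2 (id1 x))) = vcomp a (runit f);
  assoc_iso : forall (w x y z : ob B) (h : hom y z) (g : hom x y) (f : hom w x),
      isoc (assoc h g f);
  lunit_iso : forall (x y : ob B) (f : hom x y), isoc (lunit f);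
  runit_iso : forall (x y : ob B) (f : hom x y), isoc (runit f);
  pentagon : forall (v w x y z : ob B) (f : hom v w) (g : hom w x) (h : hom x y) (k : hom y z),
      vcomp (assoc k h (comp1 g f)) (assoc (comp1 k h) g f)
      = vcomp (hcomp2 (id2 k) (assoc h g f))
          (vcomp (assoc k (comp1 h g) f) (hcomp2 (assoc k h g) (id2 f)));
  triangle : forall (x y z : ob B) (f : hom x y) (g : hom y z),
      vcomp (hcomp2 (id2 g) (lunit f)) (assoc g (id1 y) f) = hcomp2 (runit g) (id2 f) }.

Record Bicat := { bdata :> BicatData; baxioms : BicatAxioms bdata }.

Definition isBigroupoid (B : Bicat) : Prop :=
  (forall (x y : ob B) (f g : hom x y) (a : cell f g), isoc a) /\
  (forall (x y : ob B) (f : hom x y), exists g : hom y x,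
      exists (u : cell (comp1 g f) (id1 x)) (v : cell (comp1 f g) (id1 y)),
        isoc u /\ isoc v).

(* Categories; [ccomp g f] is "g after f" (juxtaposition g f).          *)
Record CatData := {
  cob : Type;
  chom : cob -> cob -> Type;
  cid : forall a : cob, chom a a;
  ccomp : forall a b c : cob, chom b c -> chom a b -> chom a c }.

Arguments chom {_} a b.
Arguments cid {_} a.
Arguments ccomp {_ _ _ _} g f.

Record CatAxioms (C : CatData) : Prop := {
  c_assoc : forall (a b c d : cob C) (h : chom c d) (g : chom b c) (f : chom a b),
      ccomp h (ccomp g f) = ccomp (ccomp h g) f;
  c_idl : forall (a b : cob C) (f : chom a b), ccomp (cid b) f = f;
  c_idr : forall (a b : cob C) (f : chom a b), ccomp f (cid a) = f }.

Record Cat := { cdata :> CatData; caxioms : CatAxioms cdata }.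

Definition isGroupoid (P : Cat) : Prop :=
  forall (a b : cob P) (f : chom a b),
    exists g : chom b a, ccomp g f = cid a /\ ccomp f g = cid b.

(* Right actions of a bicategory B on a category P.
   [mom] is the momentum Λ.  Objects of the fibred product C x_{B0} B1 are
   pairs (p, f) with f : x -> y a 1-cell and a proof [e : mom p = y] that
   Λ(p) is the target D_0(f); [act p f e] is p ◁ f.  Morphisms (a, φ) of the
   fibred product are pairs a : p -> q, φ : f => g with f, g : x -> y, and
   [actm a φ ep eq] is a ◁ φ.  Because the fibred-product conditions are
   carried as equality proofs, all axioms are quantified over these proofs
   (they are all equal by proof irrelevance).                          *)
Unset Implicit Arguments.
Record RightAction (B : Bicat) (P : Cat) := {
  mom : cob P -> ob B;
  (* Λ is a functor to the discrete category B0 *)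
  mom_hom : forall (p q : cob P) (a : chom p q), mom p = mom q;
  act : forall (p : cob P) (x y : ob B) (f : hom x y), mom p = y -> cob P;
  mom_act : forall (p : cob P) (x y : ob B) (f : hom x y) (e : mom p = y),
      mom (act p _ _ f e) = x;
  actm : forall (p q : cob P) (a : chom p q) (x y : ob B) (f g : hom x y)
      (ep : mom p = y) (eq : mom q = y), cell f g ->
      chom (act p _ _ f ep) (act q _ _ g eq);
  actm_id : forall (p : cob P) (x y : ob B) (f : hom x y) (e : mom p = y),
      actm _ _ (cid p) _ _ _ _ e e (id2 f) = cid (act p _ _ f e);
  actm_comp : forall (p q r : cob P) (a : chom p q) (b : chom q r) (x y : ob B)
      (f g h : hom x y) (ep : mom p = y) (eq : mom q = y) (er : mom r = y)
      (al : cell f g) (be : cell g h),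
      actm _ _ (ccomp b a) _ _ _ _ ep er (vcomp be al)
      = ccomp (actm _ _ b _ _ _ _ eq er be) (actm _ _ a _ _ _ _ ep eq al);
  kappa : forall (p : cob P) (x y z : ob B) (f : hom y z) (g : hom x y)
      (e : mom p = z) (e' : mom (act p _ _ f e) = y),
      chom (act (act p _ _ f e) _ _ g e') (act p _ _ (comp1 f g) e);
  kappa_nat : forall (p q : cob P) (a : chom p q) (x y z : ob B)
      (f f' : hom y z) (g g' : hom x y) (be : cell f f') (al : cell g g')
      (ep : mom p = z) (eq : mom q = z)
      (ep' : mom (act p _ _ f ep) = y) (eq' : mom (act q _ _ f' eq) = y),
      ccomp (actm _ _ a _ _ _ _ ep eq (hcomp2 be al)) (kappa p _ _ _ f g ep ep')
      = ccomp (kappa q _ _ _ f' g' eq eq')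
              (actm _ _ (actm _ _ a _ _ _ _ ep eq be) _ _ _ _ ep' eq' al);
  kappa_iso : forall (p : cob P) (x y z : ob B) (f : hom y z) (g : hom x y)
      (e : mom p = z) (e' : mom (act p _ _ f e) = y),
      exists k' : chom (act p _ _ (comp1 f g) e) (act (act p _ _ f e) _ _ g e'),
        ccomp k' (kappa p _ _ _ f g e e') = cid _ /\ ccomp (kappa p _ _ _ f g e e') k' = cid _;
  iota : forall (p : cob P) (y : ob B) (e : mom p = y), chom (act p _ _ (id1 y) e) p;
  iota_inv : forall (p : cob P) (y : ob B) (e : mom p = y), chom p (act p _ _ (id1 y) e);
  iota_inv_l : forall (p : cob P) (y : ob B) (e : mom p = y),
      ccomp (iota_inv p y e) (iota p y e) = cid _;
  iota_inv_r : forall (p : cob P) (y : ob B) (e : mom p = y),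
      ccomp (iota p y e) (iota_inv p y e) = cid p;
  iota_nat : forall (p q : cob P) (a : chom p q) (y : ob B) (ep : mom p = y) (eq : mom q = y),
      ccomp (iota q y eq) (actm _ _ a _ _ _ _ ep eq (id2 (id1 y))) = ccomp a (iota p y ep);
  act_ax1 : forall (p : cob P) (w x y z : ob B) (f : hom y z) (g : hom x y) (h : hom w x)
      (e : mom p = z) (e1 : mom (act p _ _ f e) = y)
      (e2 : mom (act (act p _ _ f e) _ _ g e1) = x)
      (e3 : mom (act p _ _ (comp1 f g) e) = x),
      ccomp (actm _ _ (cid p) _ _ _ _ e e (assoc f g h))
        (ccomp (kappa p _ _ _ (comp1 f g) h e e3)
               (actm _ _ (kappa p _ _ _ f g e e1) _ _ _ _ e2 e3 (id2 h)))
      = ccomp (kappa p _ _ _ f (comp1 g h) e e1) (kappa (act p _ _ f e) _ _ _ g h e1 e2);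
  act_ax2 : forall (p : cob P) (x y : ob B) (f : hom x y) (e : mom p = y)
      (e1 : mom (act p _ _ (id1 y) e) = y),
      ccomp (actm _ _ (cid p) _ _ _ _ e e (lunit f)) (kappa p _ _ _ (id1 y) f e e1)
      = actm _ _ (iota p y e) _ _ _ _ e1 e (id2 f);
  act_ax3 : forall (p : cob P) (x y : ob B) (f : hom x y) (e : mom p = y)
      (e1 : mom (act p _ _ f e) = x),
      ccomp (actm _ _ (cid p) _ _ _ _ e e (runit f)) (kappa p _ _ _ f (id1 x) e e1)
      = iota (act p _ _ f e) x e1 }.
Set Implicit Arguments.

Arguments mom {B P} _ p.
Arguments mom_hom {B P} _ {p q} a.
Arguments act {B P} _ p {x y} f _.
Arguments mom_act {B P} _ p {x y} f e.
Arguments actm {B P} _ {p q} a {x y f g} ep eq _.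
Arguments actm_id {B P} _ p {x y} f e.
Arguments actm_comp {B P} _ {p q r} a b {x y f g h} ep eq er al be.
Arguments kappa {B P} _ p {x y z} f g e e'.
Arguments kappa_nat {B P} _ {p q} a {x y z f f' g g'} be al ep eq ep' eq'.
Arguments iota {B P} _ p {y} e.
Arguments iota_inv {B P} _ p {y} e.
Arguments iota_inv_l {B P} _ p {y} e.
Arguments iota_inv_r {B P} _ p {y} e.
Arguments iota_nat {B P} _ {p q} a {y} ep eq.
Arguments act_ax1 {B P} _ p {w x y z} f g h e e1 e2 e3.
Arguments act_ax2 {B P} _ p {x y} f e e1.
Arguments act_ax3 {B P} _ p {x y} f e e1.

Arguments mom {B P} _ p.
Arguments mom_hom {B P} _ {p q} a.
Arguments act {B P} _ p {x y} f _.
Arguments mom_act {B P} _ p {x y} f e.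
Arguments actm {B P} _ {p q} a {x y f g} ep eq _.
Arguments actm_id {B P} _ p {x y} f e.
Arguments actm_comp {B P} _ {p q r} a b {x y f g h} ep eq er al be.
Arguments kappa {B P} _ p {x y z} f g e e'.
Arguments kappa_nat {B P} _ {p q} a {x y z f f' g g'} be al ep eq ep' eq'.
Arguments kappa_iso {B P} _ p {x y z} f g e e'.
Arguments iota {B P} _ p {y} e.
Arguments iota_inv {B P} _ p {y} e.
Arguments iota_inv_l {B P} _ p {y} e.
Arguments iota_inv_r {B P} _ p {y} e.
Arguments iota_nat {B P} _ {p q} a {y} ep eq.
Arguments act_ax1 {B P} _ p {w x y z} f g h e e1 e2 e3.
Arguments act_ax2 {B P} _ p {x y} f e e1.
Arguments act_ax3 {B P} _ p {x y} f e e1.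

Section ActionBicat.
Variables (B : Bicat) (P : Cat) (A : RightAction B P).

Let BA := baxioms B.
Let PA := caxioms P.

Definition ab_hom (q p : cob P) : Type :=
  {h : hom (mom A q) (mom A p) & chom q (act A p h erefl)}.

Definition ab_cell (q p : cob P) (u v : ab_hom q p) : Type :=
  {c : cell (projT1 u) (projT1 v) |
     ccomp (actm A (cid p) erefl erefl c) (projT2 u) = projT2 v}.

Definition ab_id1 (p : cob P) : ab_hom p p :=
  existT _ (id1 (mom A p)) (iota_inv A p erefl).

Definition ab_comp1 (r q p : cob P) (u : ab_hom q p) (w : ab_hom r q) : ab_hom r p :=
  existT _ (comp1 (projT1 u) (projT1 w))
    (ccomp (kappa A p (projT1 u) (projT1 w) erefl (mom_act A p (projT1 u) erefl))
       (ccomp (actm A (projT2 u) erefl (mom_act A p (projT1 u) erefl) (id2 (projT1 w)))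
          (projT2 w))).

Lemma ab_id2_ok (q p : cob P) (u : ab_hom q p) :
  ccomp (actm A (cid p) erefl erefl (id2 (projT1 u))) (projT2 u) = projT2 u.
Proof. by rewrite actm_id (c_idl PA). Qed.

Definition ab_id2 (q p : cob P) (u : ab_hom q p) : ab_cell u u :=
  exist _ (id2 (projT1 u)) (ab_id2_ok u).

Lemma ab_vcomp_ok (q p : cob P) (u v w : ab_hom q p) (b : ab_cell v w) (a : ab_cell u v) :
  ccomp (actm A (cid p) erefl erefl (vcomp (proj1_sig b) (proj1_sig a))) (projT2 u)
  = projT2 w.
Proof.
case: b a => b Hb [a Ha] /=.
by rewrite -{1}(c_idl PA (cid p)) actm_comp -(c_assoc PA) Ha Hb.
Qed.

Definition ab_vcomp (q p : cob P) (u v w : ab_hom q p) (b : ab_cell v w) (a : ab_cell u v)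
  : ab_cell u w := exist _ (vcomp (proj1_sig b) (proj1_sig a)) (ab_vcomp_ok b a).


Lemma ab_hcomp2_ok (r q p : cob P) (w w' : ab_hom r q) (u v : ab_hom q p)
      (c : ab_cell u v) (d : ab_cell w w') :
  ccomp (actm A (cid p) erefl erefl (hcomp2 (proj1_sig c) (proj1_sig d)))
        (projT2 (ab_comp1 u w)) = projT2 (ab_comp1 v w').
Proof.
case: c d => c Hc [d Hd] /=.
rewrite (c_assoc PA) (kappa_nat A (cid p) c d erefl erefl
          (mom_act A p (projT1 u) erefl) (mom_act A p (projT1 v) erefl)).
rewrite -(c_assoc PA); congr (ccomp _ _).
rewrite (c_assoc PA) -actm_comp Hc (v_idr BA).
by rewrite -Hd (c_assoc PA) -actm_comp (c_idr PA) (v_idl BA).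
Qed.

Definition ab_hcomp2 (r q p : cob P) (w w' : ab_hom r q) (u v : ab_hom q p)
      (c : ab_cell u v) (d : ab_cell w w') : ab_cell (ab_comp1 u w) (ab_comp1 v w') :=
  exist _ (hcomp2 (proj1_sig c) (proj1_sig d)) (ab_hcomp2_ok c d).


Lemma actm_comp_id (p q r : cob P) (a : chom p q) (b : chom q r) (x y : ob B)
      (f : hom x y) (ep : mom A p = y) (eq : mom A q = y) (er : mom A r = y) :
  actm A (ccomp b a) ep er (id2 f) = ccomp (actm A b eq er (id2 f)) (actm A a ep eq (id2 f)).
Proof. by rewrite -actm_comp (v_idl BA). Qed.

Lemma ab_assoc_ok (s r q p : cob P) (u : ab_hom q p) (w : ab_hom r q) (t : ab_hom s r) :
  ccomp (actm A (cid p) erefl erefl (assoc (projT1 u) (projT1 w) (projT1 t)))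
        (projT2 (ab_comp1 (ab_comp1 u w) t)) = projT2 (ab_comp1 u (ab_comp1 w t)).
Proof.
case: u w t => h psi [g phi] [f chi] /=.
set Eh := mom_act A p h erefl.
set Eg := mom_act A q g erefl.
set Ehg := mom_act A p (comp1 h g) erefl.
set E2 := mom_act A (act A p h erefl) g Eh.
rewrite (actm_comp_id _ _ _ _ E2) (actm_comp_id _ _ _ _ Eg).
have H := act_ax1 A p h g f erefl Eh E2 Ehg.
rewrite (c_assoc PA) in H.
rewrite !(c_assoc PA) H -(c_assoc PA (kappa A p h (comp1 g f) erefl Eh)).
have K := kappa_nat A psi (id2 g) (id2 f) erefl Eh Eg E2.
rewrite (h_id BA) in K.
by rewrite -K !(c_assoc PA).
Qed.

Definition ab_assoc (s r q p : cob P) (u : ab_hom q p) (w : ab_hom r q) (t : ab_hom s r)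
  : ab_cell (ab_comp1 (ab_comp1 u w) t) (ab_comp1 u (ab_comp1 w t)) :=
  exist _ (assoc (projT1 u) (projT1 w) (projT1 t)) (ab_assoc_ok u w t).

Lemma ab_lunit_ok (q p : cob P) (u : ab_hom q p) :
  ccomp (actm A (cid p) erefl erefl (lunit (projT1 u))) (projT2 (ab_comp1 (ab_id1 p) u))
  = projT2 u.
Proof.
case: u => h psi /=.
rewrite (c_assoc PA) act_ax2 (c_assoc PA) -actm_comp iota_inv_r (v_idl BA) actm_id.
by rewrite (c_idl PA).
Qed.

Definition ab_lunit (q p : cob P) (u : ab_hom q p) : ab_cell (ab_comp1 (ab_id1 p) u) u :=
  exist _ (lunit (projT1 u)) (ab_lunit_ok u).

Lemma ab_runit_ok (q p : cob P) (u : ab_hom q p) :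
  ccomp (actm A (cid p) erefl erefl (runit (projT1 u))) (projT2 (ab_comp1 u (ab_id1 q)))
  = projT2 u.
Proof.
case: u => h psi /=.
rewrite (c_assoc PA) act_ax3 (c_assoc PA) iota_nat -(c_assoc PA) iota_inv_r.
by rewrite (c_idr PA).
Qed.

Definition ab_runit (q p : cob P) (u : ab_hom q p) : ab_cell (ab_comp1 u (ab_id1 q)) u :=
  exist _ (runit (projT1 u)) (ab_runit_ok u).

Definition ActionBicat : BicatData :=
  {| ob := cob P;
     hom := ab_hom;
     cell := ab_cell;
     id1 := ab_id1;
     comp1 := ab_comp1;
     id2 := ab_id2;
     vcomp := ab_vcomp;
     hcomp2 := ab_hcomp2;
     assoc := ab_assoc;
     lunit := ab_lunit;
     runit := ab_runit |}.

End ActionBicat.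

Arguments ActionBicat {B P} A.

Unset Implicit Arguments.
Record HomData (C D : BicatData) := {
  F0 : ob C -> ob D;
  F1 : forall x y : ob C, hom x y -> hom (F0 x) (F0 y);
  F2 : forall (x y : ob C) (f g : hom x y), cell f g -> cell (F1 x y f) (F1 x y g);
  Fcomp : forall (x y z : ob C) (f : hom x y) (g : hom y z),
      cell (comp1 (F1 y z g) (F1 x y f)) (F1 x z (comp1 g f));
  Funit : forall x : ob C, cell (id1 (F0 x)) (F1 x x (id1 x)) }.
Set Implicit Arguments.

Arguments F0 {C D} h x.
Arguments F1 {C D} h {x y} f.
Arguments F2 {C D} h {x y f g} a.
Arguments Fcomp {C D} h {x y z} f g.
Arguments Funit {C D} h x.

Record isHom (C D : BicatData) (F : HomData C D) : Prop := {
  F2_id : forall (x y : ob C) (f : hom x y), F2 F (id2 f) = id2 (F1 F f);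
  F2_comp : forall (x y : ob C) (f g h : hom x y) (b : cell g h) (a : cell f g),
      F2 F (vcomp b a) = vcomp (F2 F b) (F2 F a);
  Fcomp_nat : forall (x y z : ob C) (f f' : hom x y) (g g' : hom y z)
      (a : cell f f') (b : cell g g'),
      vcomp (Fcomp F f' g') (hcomp2 (F2 F b) (F2 F a))
      = vcomp (F2 F (hcomp2 b a)) (Fcomp F f g);
  F_assoc : forall (w x y z : ob C) (f : hom w x) (g : hom x y) (h : hom y z),
      vcomp (F2 F (assoc h g f))
            (vcomp (Fcomp F f (comp1 h g)) (hcomp2 (Fcomp F g h) (id2 (F1 F f))))
      = vcomp (Fcomp F (comp1 g f) h)
            (vcomp (hcomp2 (id2 (F1 F h)) (Fcomp F f g)) (assoc (F1 F h) (F1 F g) (F1 F f)));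
  F_lunit : forall (x y : ob C) (f : hom x y),
      vcomp (F2 F (lunit f)) (vcomp (Fcomp F f (id1 y)) (hcomp2 (Funit F y) (id2 (F1 F f))))
      = lunit (F1 F f);
  F_runit : forall (x y : ob C) (f : hom x y),
      vcomp (F2 F (runit f)) (vcomp (Fcomp F (id1 x) f) (hcomp2 (id2 (F1 F f)) (Funit F x)))
      = runit (F1 F f);
  Fcomp_iso : forall (x y z : ob C) (f : hom x y) (g : hom y z), isoc (Fcomp F f g);
  Funit_iso : forall x : ob C, isoc (Funit F x) }.

Definition isNormal (C D : BicatData) (F : HomData C D) : Prop :=
  forall x : ob C, exists e : F1 F (id1 x) = id1 (F0 F x),
    Funit F x = match esym e in (_ = g) return cell (id1 (F0 F x)) g with
                | erefl => id2 (id1 (F0 F x)) end.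

Definition compH (C D E : BicatData) (G : HomData D E) (F : HomData C D) : HomData C E :=
  {| F0 := fun x => F0 G (F0 F x);
     F1 := fun x y f => F1 G (F1 F f);
     F2 := fun x y f g a => F2 G (F2 F a);
     Fcomp := fun x y z f g => vcomp (F2 G (Fcomp F f g)) (Fcomp G (F1 F f) (F1 F g));
     Funit := fun x => vcomp (F2 G (Funit F x)) (Funit G (F0 F x)) |}.

Definition projH (B : Bicat) (P : Cat) (A : RightAction B P) : HomData (ActionBicat A) B :=
  @Build_HomData (ActionBicat A) B
     (mom A)
     (fun q p u => projT1 u)
     (fun q p u v c => proj1_sig c)
     (fun r q p w u => id2 (comp1 (projT1 u) (projT1 w)))
     (fun p => id2 (id1 (mom A p))).

(* The ordinal [n] = {0 < ... < n} as a locally discrete 2-category;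
   [PosetBicat m] has objects 'I_m, so [n] is [PosetBicat n.+1].       *)
Definition PosetBicat (m : nat) : BicatData :=
  {| ob := 'I_m;
     hom := fun i j => is_true (i <= j);
     cell := fun i j f g => unit;
     id1 := fun i => leqnn i;
     comp1 := fun i j k g f => leq_trans f g;
     id2 := fun _ _ _ => tt;
     vcomp := fun _ _ _ _ _ _ _ => tt;
     hcomp2 := fun _ _ _ _ _ _ _ _ _ => tt;
     assoc := fun _ _ _ _ _ _ _ => tt;
     lunit := fun _ _ _ => tt;
     runit := fun _ _ _ => tt |}.

Lemma lift_mono (m : nat) (i : 'I_m.+1) (j k : 'I_m) : j <= k -> lift i j <= lift i k.
Proof. by rewrite /= leq_bump2. Qed.

Definition coface (m : nat) (i : 'I_m.+1) : HomData (PosetBicat m) (PosetBicat m.+1) :=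
  @Build_HomData (PosetBicat m) (PosetBicat m.+1)
     (fun j : 'I_m => lift i j)
     (fun (j k : 'I_m) (h : is_true (j <= k)) => lift_mono i h)
     (fun _ _ _ _ _ => tt)
     (fun _ _ _ _ _ => tt)
     (fun _ => tt).

(* Duskin nerve: N_2(C)_n = normal homomorphisms [n] -> C,
   here [Nerve C n.+1].  Face maps d_i are precomposition with δ_i.      *)
Definition Nerve (C : BicatData) (m : nat) : Type :=
  {F : HomData (PosetBicat m) C | isHom F /\ isNormal F}.

Definition dface (C : BicatData) (m : nat) (i : 'I_m.+1)
  (F : HomData (PosetBicat m.+1) C) : HomData (PosetBicat m) C := compH F (coface i).

(* The simplicial map N_2(G) : N_2(E) -> N_2(Y) induced by a homomorphism G
   (postcomposition) is an exact fibration in dimension n: the canonical map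
   E_n -> Λ^k_n(E) x_{Λ^k_n(Y)} Y_n is a bijection for every 0 <= k <= n.                              *)
Definition exact_fibration_dim (E Y : BicatData) (G : HomData E Y) (n : nat) : Prop :=
  match n with
  | 0 => forall y : Nerve Y 1, exists! x : Nerve E 1, compH G (proj1_sig x) = proj1_sig y
  | m.+1 =>
    forall (k : 'I_m.+2) (hrn : forall j : 'I_m.+2, j != k -> Nerve E m.+1)
           (y : Nerve Y m.+2),
      (forall (i j : 'I_m.+2) (hi : i != k) (hj : j != k), i < j ->
         dface (inord i) (proj1_sig (hrn j hj)) = dface (inord j.-1) (proj1_sig (hrn i hi))) ->
      (forall (j : 'I_m.+2) (hj : j != k),
         compH G (proj1_sig (hrn j hj)) = dface j (proj1_sig y)) ->
      exists! x : Nerve E m.+2,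
        (forall (j : 'I_m.+2) (hj : j != k), dface j (proj1_sig x) = proj1_sig (hrn j hj))
        /\ compH G (proj1_sig x) = proj1_sig y
  end.

(* Main.v *)
Require Import Defs.
From mathcomp Require Import all_boot.
From Stdlib Require Import ProofIrrelevance FunctionalExtensionality Eqdep ClassicalEpsilon Lia.


Set Implicit Arguments. Unset Strict Implicit. Unset Printing Implicit Defensive.

Lemma inj2 (U : Type) (P : U -> Type) (p : U) (x y : P p) :
  existT P p x = existT P p y -> x = y.
Proof. exact: Eqdep.EqdepTheory.inj_pair2. Qed.

Section Gen.
Variable D : BicatData.

Definition T1 := {xy : ob D * ob D & hom xy.1 xy.2}.
Definition tot1 (x y : ob D) (f : hom x y) : T1 :=
  existT (fun xy : ob D * ob D => hom xy.1 xy.2) (x,y) f.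
Definition B2 := {xy : ob D * ob D & (hom xy.1 xy.2 * hom xy.1 xy.2)%type}.
Definition T2 := {t : B2 & cell (projT2 t).1 (projT2 t).2}.
Definition tot2 (x y : ob D) (f g : hom x y) (c : cell f g) : T2 :=
  existT (fun t : B2 => cell (projT2 t).1 (projT2 t).2)
    (existT (fun xy : ob D * ob D => (hom xy.1 xy.2 * hom xy.1 xy.2)%type) (x,y) (f,g)) c.

Lemma tot1_inj x y (f g : hom x y) : tot1 f = tot1 g -> f = g.
Proof. exact: inj2. Qed.

Lemma tot2_inj x y (f g : hom x y) (c d : cell f g) : tot2 c = tot2 d -> c = d.
Proof. exact: inj2. Qed.

Lemma tot2_src x y x' y' (f g : hom x y) (f' g' : hom x' y') (c : cell f g) (d : cell f' g') :
  tot2 c = tot2 d -> tot1 f = tot1 f' /\ tot1 g = tot1 g'.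
Proof.
move=> E; split.
- exact: (f_equal (fun t : T2 => existT (fun xy : ob D * ob D => hom xy.1 xy.2)
     (projT1 (projT1 t)) (projT2 (projT1 t)).1) E).
- exact: (f_equal (fun t : T2 => existT (fun xy : ob D * ob D => hom xy.1 xy.2)
     (projT1 (projT1 t)) (projT2 (projT1 t)).2) E).
Qed.

Lemma tot1_obj x y x' y' (f : hom x y) (f' : hom x' y') :
  tot1 f = tot1 f' -> x = x' /\ y = y'.
Proof. move=> E. have E1 := f_equal (@projT1 _ _) E. by case: E1. Qed.

Lemma tot2_id2 x y x' y' (f : hom x y) (f' : hom x' y') :
  tot1 f = tot1 f' -> tot2 (id2 f) = tot2 (id2 f').
Proof.
move=> E; case: (tot1_obj E) => ex ey; subst x' y'.
by rewrite (tot1_inj E).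
Qed.

Lemma tot2_id1 x x' : x = x' -> tot2 (id2 (id1 x)) = tot2 (id2 (id1 x')).
Proof. by move=> ->. Qed.

End Gen.

Arguments tot1 {D x y} f.
Arguments tot2 {D x y f g} c.

Lemma hom_ext (C D : BicatData) (X Y : HomData C D) :
  (forall x, F0 X x = F0 Y x) ->
  (forall x y (f : hom x y), tot1 (F1 X f) = tot1 (F1 Y f)) ->
  (forall x y (f g : hom x y) (a : cell f g), tot2 (F2 X a) = tot2 (F2 Y a)) ->
  (forall x y z (f : hom x y) (g : hom y z), tot2 (Fcomp X f g) = tot2 (Fcomp Y f g)) ->
  (forall x, tot2 (Funit X x) = tot2 (Funit Y x)) -> X = Y.
Proof.
case: X => a b c d e; case: Y => a' b' c' d' e' /= H0 H1 H2 H3 H4.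
have Ea : a = a' := functional_extensionality _ _ H0. subst a'.
have Eb : b = b'.
  do 3 (apply: functional_extensionality_dep => ?). exact: tot1_inj (H1 _ _ _).
subst b'.
have Ec : c = c'.
  do 5 (apply: functional_extensionality_dep => ?). exact: tot2_inj (H2 _ _ _ _ _).
have Ed : d = d'.
  do 5 (apply: functional_extensionality_dep => ?). exact: tot2_inj (H3 _ _ _ _ _).
have Ee : e = e'.
  apply: functional_extensionality_dep => ?. exact: tot2_inj (H4 _).
by subst.
Qed.

Section HomProj.
Variables (C D : BicatData) (X Y : HomData C D) (E : X = Y).
Lemma hp0 x : F0 X x = F0 Y x. Proof. by rewrite E. Qed.
Lemma hp1 x y (f : hom x y) : tot1 (F1 X f) = tot1 (F1 Y f). Proof. by rewrite E. Qed.
Lemma hp2 x y (f g : hom x y) (a : cell f g) : tot2 (F2 X a) = tot2 (F2 Y a). Proof. by rewrite E. Qed.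
Lemma hpc x y z (f : hom x y) (g : hom y z) : tot2 (Fcomp X f g) = tot2 (Fcomp Y f g).
Proof. by rewrite E. Qed.
End HomProj.

Section Poset.
Variables (N : nat) (D : BicatData) (X : HomData (PosetBicat N) D).

Lemma F1_pi (i j : 'I_N) (h h' : i <= j) : F1 X (h : @hom (PosetBicat N) i j) = F1 X (h' : @hom (PosetBicat N) i j).
Proof. by rewrite (bool_irrelevance h h'). Qed.
End Poset.


Set Implicit Arguments. Unset Strict Implicit. Unset Printing Implicit Defensive.

Section Act.
Variables (B : Bicat) (P : Cat) (A : RightAction B P).
Local Notation E := (ActionBicat A).
Let BA := baxioms B.
Let PA := caxioms P.

Definition etot (q p : cob P) (u : ab_hom A q p) : T1 E := @tot1 E q p u.
Definition mkE (q p : cob P) (h : hom (mom A q) (mom A p)) (psi : chom q (act A p h erefl))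
  : ab_hom A q p := existT (fun h => chom q (act A p h erefl)) h psi.

Lemma abc_eq (q p : cob P) (u v : ab_hom A q p) (c d : ab_cell u v) :
  proj1_sig c = proj1_sig d -> c = d.
Proof.
case: c d => c Hc [d Hd] /= Ecd; subst d.
by rewrite (proof_irrelevance _ Hc Hd).
Qed.

Definition Cond (q r p : cob P) (u : ab_hom A q r) (w : ab_hom A r p) (v : ab_hom A q p)
  (be : cell (comp1 (projT1 w) (projT1 u)) (projT1 v)) : Prop :=
  ccomp (actm A (cid p) erefl erefl be) (projT2 (ab_comp1 w u)) = projT2 v.

Lemma etot_obj q p q' p' (u : ab_hom A q p) (u' : ab_hom A q' p') :
  etot u = etot u' -> q = q' /\ p = p'.
Proof. exact: (@tot1_obj E). Qed.

Lemma etot_inj q p (u u' : ab_hom A q p) : etot u = etot u' -> u = u'.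
Proof. exact: (@tot1_inj E). Qed.

Lemma etot_B q p q' p' (u : ab_hom A q p) (u' : ab_hom A q' p') :
  etot u = etot u' -> tot1 (projT1 u) = tot1 (projT1 u').
Proof.
move=> Eu; case: (etot_obj Eu) => E1 E2; subst q' p'.
by rewrite (etot_inj Eu).
Qed.

Lemma mkE_inj q p (h : hom (mom A q) (mom A p)) (psi psi' : chom q (act A p h erefl)) :
  etot (mkE psi) = etot (mkE psi') -> psi = psi'.
Proof. move/etot_inj. exact: inj2. Qed.

Lemma retype q p q' p' (u' : ab_hom A q' p') (h : hom (mom A q) (mom A p)) :
  q' = q -> p' = p -> tot1 (projT1 u') = tot1 h ->
  exists psi, etot (mkE (h:=h) psi) = etot u'.
Proof.
move=> E1 E2; subst q' p' => /(@tot1_inj B) Eh; subst h.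
by case: u' => h psi; exists psi.
Qed.

Lemma etot_comp r q p r' q' p' (u : ab_hom A q p) (w : ab_hom A r q)
  (u' : ab_hom A q' p') (w' : ab_hom A r' q') :
  etot u = etot u' -> etot w = etot w' -> etot (ab_comp1 u w) = etot (ab_comp1 u' w').
Proof.
move=> Eu Ew; case: (etot_obj Eu) => E1 E2; case: (etot_obj Ew) => E3 E4; subst.
by rewrite (etot_inj Eu) (etot_inj Ew).
Qed.

Lemma etot_id1 p p' : p = p' -> etot (ab_id1 A p) = etot (ab_id1 A p').
Proof. by move=> ->. Qed.

Lemma tot2E q p q' p' (u v : ab_hom A q p) (u' v' : ab_hom A q' p')
  (c : ab_cell u v) (c' : ab_cell u' v') :
  etot u = etot u' -> etot v = etot v' -> tot2 (proj1_sig c) = tot2 (proj1_sig c') ->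
  @tot2 E _ _ _ _ c = @tot2 E _ _ _ _ c'.
Proof.
move=> Eu Ev; case: (etot_obj Eu) => E1 E2; subst q' p'.
move: c'; rewrite -(etot_inj Eu) -(etot_inj Ev) => c' /(@tot2_inj B) Ec.
by rewrite (abc_eq Ec).
Qed.

Lemma cond_transfer q r p q' r' p' (u : ab_hom A q r) (w : ab_hom A r p) (v : ab_hom A q p)
  (be : cell (comp1 (projT1 w) (projT1 u)) (projT1 v))
  (u' : ab_hom A q' r') (w' : ab_hom A r' p') (v' : ab_hom A q' p')
  (be' : cell (comp1 (projT1 w') (projT1 u')) (projT1 v')) :
  etot u = etot u' -> etot w = etot w' -> etot v = etot v' -> tot2 be = tot2 be' ->
  Cond be -> Cond be'.
Proof.
move=> Eu Ew Ev; case: (etot_obj Eu) => E1 E2; case: (etot_obj Ew) => E3 E4; subst.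
move: be'; rewrite -(etot_inj Eu) -(etot_inj Ew) -(etot_inj Ev) => be' /(@tot2_inj B) ->.
done.
Qed.

Hypothesis HP : isGroupoid P.

Lemma monoP (a b c : cob P) (f : chom b c) (x y : chom a b) : ccomp f x = ccomp f y -> x = y.
Proof.
case: (HP f) => g [Hgf _] E.
by rewrite -(c_idl PA x) -(c_idl PA y) -Hgf -!(c_assoc PA) E.
Qed.

Lemma epiP (a b c : cob P) (f : chom a b) (x y : chom b c) : ccomp x f = ccomp y f -> x = y.
Proof.
case: (HP f) => g [_ Hfg] E.
by rewrite -(c_idr PA x) -(c_idr PA y) -Hfg !(c_assoc PA) E.
Qed.

Lemma solveP (a b c : cob P) (f : chom b c) (y : chom a c) : exists x, ccomp f x = y.
Proof.
case: (HP f) => g [_ Hfg]; exists (ccomp g y).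
by rewrite (c_assoc PA) Hfg (c_idl PA).
Qed.

Lemma solvePr (a b c : cob P) (f : chom a b) (y : chom a c) : exists x, ccomp x f = y.
Proof.
case: (HP f) => g [Hgf _]; exists (ccomp y g).
by rewrite -(c_assoc PA) Hgf (c_idr PA).
Qed.

Lemma actm_cid_comp (p : cob P) (x y : ob B) (f g h : hom x y) (e : mom A p = y)
  (b : cell g h) (a : cell f g) :
  actm A (cid p) e e (vcomp b a) = ccomp (actm A (cid p) e e b) (actm A (cid p) e e a).
Proof. by rewrite -actm_comp (c_idl PA). Qed.

Section Equiv.
Variables (x y : ob B) (f : hom x y) (g : hom y x) (v : cell (comp1 f g) (id1 y)).

Definition eta (p : cob P) (ep : mom A p = y) :
  chom (act A (act A p f ep) g (mom_act A p f ep)) p :=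
  ccomp (Defs.iota A p ep) (ccomp (actm A (cid p) ep ep v) (kappa A p f g ep (mom_act A p f ep))).

Lemma eta_nat (p q : cob P) (a : chom p q) (ep : mom A p = y) (eq : mom A q = y) :
  ccomp (eta eq) (actm A (actm A a ep eq (id2 f)) (mom_act A p f ep) (mom_act A q f eq) (id2 g))
  = ccomp a (eta ep).
Proof.
rewrite /eta -!(c_assoc PA).
rewrite -(kappa_nat A a (id2 f) (id2 g) ep eq (mom_act A p f ep) (mom_act A q f eq)).
rewrite (h_id BA) !(c_assoc PA); congr (ccomp _ _).
rewrite -(c_assoc PA (Defs.iota A q eq)) -actm_comp (c_idl PA) (v_idr BA).
rewrite -{1}(c_idr PA a) -{1}(v_idl BA v) actm_comp.
by rewrite !(c_assoc PA) (iota_nat A a ep eq).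
Qed.

Lemma faithful_gen (p q : cob P) (a b : chom p q) (ep : mom A p = y) (eq : mom A q = y) :
  actm A a ep eq (id2 f) = actm A b ep eq (id2 f) -> a = b.
Proof.
move=> Eab; apply: (@epiP _ _ _ (eta ep)).
by rewrite -!eta_nat Eab.
Qed.
End Equiv.

Lemma full_gen (x y : ob B) (f : hom x y) (g : hom y x) (v : cell (comp1 f g) (id1 y))
  (u : cell (comp1 g f) (id1 x))
  (p q : cob P) (ep : mom A p = y) (eq : mom A q = y) (c : chom (act A p f ep) (act A q f eq)) :
  exists a, actm A a ep eq (id2 f) = c.
Proof.
have [a Ha] := solvePr (eta v ep)
  (ccomp (eta v eq) (actm A c (mom_act A p f ep) (mom_act A q f eq) (id2 g))).
exists a.
apply: (faithful_gen u (ep:=mom_act A p f ep) (eq:=mom_act A q f eq)).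
apply: (@monoP _ _ _ (eta v eq)).
by rewrite eta_nat Ha.
Qed.

Definition Faith (x y : ob B) (h : hom x y) : Prop :=
  forall (p q : cob P) (a b : chom p q) (ep : mom A p = y) (eq : mom A q = y),
    actm A a ep eq (id2 h) = actm A b ep eq (id2 h) -> a = b.
Definition Full (x y : ob B) (h : hom x y) : Prop :=
  forall (p q : cob P) (ep : mom A p = y) (eq : mom A q = y) (c : chom (act A p h ep) (act A q h eq)),
    exists a, actm A a ep eq (id2 h) = c.

Lemma equiv_faith_full (HBg : isBigroupoid B) (x y : ob B) (h : hom x y) : Faith h /\ Full h.
Proof.
case: (HBg.2 _ _ h) => g [u [v _]]; split.
- move=> p q a b ep eq; exact: (faithful_gen v).
- move=> p q ep eq c; exact: (full_gen v u).
Qed.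

Lemma Ecell_iso (HBg : isBigroupoid B) (q p : cob P) (u v : ab_hom A q p) (c : ab_cell u v) :
  @isoc E q p u v c.
Proof.
case: c => be Hbe; case: (HBg.1 _ _ _ _ be) => be' [H1 H2].
have Hbe' : ccomp (actm A (cid p) erefl erefl be') (projT2 v) = projT2 u.
  by rewrite -Hbe (c_assoc PA) -actm_cid_comp H1 actm_id (c_idl PA).
exists (exist _ be' Hbe'); split; apply: abc_eq => /=; [exact: H1 | exact: H2].
Qed.

Lemma cond_id2 q p (u v : ab_hom A q p) (e : u = v) :
  ccomp (actm A (cid p) erefl erefl
     (match e in _ = g return cell (projT1 u) (projT1 g) with erefl => id2 _ end)) (projT2 u)
  = projT2 v.
Proof. by subst v; rewrite actm_id (c_idl PA). Qed.

Lemma cond_runit q p (u0 : ab_hom A q q) (e : u0 = ab_id1 A q) (w v : ab_hom A q p)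
  (ev : v = w) (be : cell (comp1 (projT1 w) (projT1 u0)) (projT1 v)) :
  vcomp (match ev in _ = g return cell (projT1 v) (projT1 g) with erefl => id2 _ end)
    (vcomp be (hcomp2 (id2 (projT1 w))
      (match esym (f_equal (@projT1 _ _) e) in _ = g return cell (id1 (mom A q)) g
       with erefl => id2 _ end))) = runit (projT1 w) ->
  Cond be.
Proof.
subst v u0 => /= H.
rewrite (h_id BA) (v_idl BA) (v_idr BA) in H; subst be.
exact: ab_runit_ok.
Qed.

Lemma cond_lunit q p (u : ab_hom A q p) (w0 : ab_hom A p p) (e : w0 = ab_id1 A p)
  (v : ab_hom A q p) (ev : v = u) (be : cell (comp1 (projT1 w0) (projT1 u)) (projT1 v)) :
  vcomp (match ev in _ = g return cell (projT1 v) (projT1 g) with erefl => id2 _ end)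
    (vcomp be (hcomp2
      (match esym (f_equal (@projT1 _ _) e) in _ = g return cell (id1 (mom A p)) g
       with erefl => id2 _ end) (id2 (projT1 u)))) = lunit (projT1 u) ->
  Cond be.
Proof.
subst v w0 => /= H.
rewrite (h_id BA) (v_idl BA) (v_idr BA) in H; subst be.
exact: ab_lunit_ok.
Qed.

Section Cocycle.
Variables (p0 p1 p2 p3 : cob P) (u01 : ab_hom A p0 p1) (u12 : ab_hom A p1 p2)
  (u23 : ab_hom A p2 p3) (u02 : ab_hom A p0 p2) (u13 : ab_hom A p1 p3)
  (u03 u03' : ab_hom A p0 p3)
  (b012 : cell (comp1 (projT1 u12) (projT1 u01)) (projT1 u02))
  (b123 : cell (comp1 (projT1 u23) (projT1 u12)) (projT1 u13))
  (b013 : cell (comp1 (projT1 u13) (projT1 u01)) (projT1 u03))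
  (b023 : cell (comp1 (projT1 u23) (projT1 u02)) (projT1 u03'))
  (t : cell (projT1 u03) (projT1 u03'))
  (Ht : ccomp (actm A (cid p3) erefl erefl t) (projT2 u03) = projT2 u03')
  (Hcoc : vcomp t (vcomp b013 (hcomp2 b123 (id2 (projT1 u01))))
     = vcomp b023 (vcomp (hcomp2 (id2 (projT1 u23)) b012)
                  (assoc (projT1 u23) (projT1 u12) (projT1 u01)))).

Let L := ab_comp1 (ab_comp1 u23 u12) u01.

Lemma coc_Y (H012 : Cond b012) :
  ccomp (actm A (cid p3) erefl erefl (vcomp (hcomp2 (id2 (projT1 u23)) b012)
                  (assoc (projT1 u23) (projT1 u12) (projT1 u01)))) (projT2 L)
  = projT2 (ab_comp1 u23 u02).
Proof.
exact: (proj2_sig (ab_vcomp (ab_hcomp2 (ab_id2 u23) (exist _ b012 H012 : ab_cell (ab_comp1 u12 u01) u02))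
   (ab_assoc u23 u12 u01))).
Qed.

Lemma coc_H (H123 : Cond b123) :
  ccomp (actm A (cid p3) erefl erefl (hcomp2 b123 (id2 (projT1 u01)))) (projT2 L)
  = projT2 (ab_comp1 u13 u01).
Proof.
exact: (proj2_sig (ab_hcomp2 (exist _ b123 H123 : ab_cell (ab_comp1 u23 u12) u13) (ab_id2 u01))).
Qed.

Lemma coc_1 : Cond b012 -> Cond b123 -> Cond b013 -> Cond b023.
Proof.
move=> H012 H123 H013; rewrite /Cond in H012 H123 H013 *.
have HX : ccomp (actm A (cid p3) erefl erefl (vcomp t (vcomp b013 (hcomp2 b123 (id2 (projT1 u01))))))
    (projT2 L) = projT2 u03'.
  rewrite !actm_cid_comp -!(c_assoc PA) (coc_H H123). by rewrite H013 Ht.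
by rewrite -HX Hcoc actm_cid_comp -(c_assoc PA) (coc_Y H012).
Qed.

Lemma coc_2 : Cond b012 -> Cond b123 -> Cond b023 -> Cond b013.
Proof.
move=> H012 H123 H023; rewrite /Cond in H012 H123 H023 *.
apply: (@monoP _ _ _ (actm A (cid p3) erefl erefl t)); rewrite Ht.
rewrite -H023 -(coc_Y H012) (c_assoc PA (actm A (cid p3) erefl erefl b023)) -actm_cid_comp -Hcoc.
by rewrite !actm_cid_comp -!(c_assoc PA) (coc_H H123).
Qed.

Lemma coc_3 : Cond b123 -> Cond b013 -> Cond b023 -> Cond b012.
Proof.
move=> H123 H013 H023; rewrite /Cond in H123 H013 H023 *.
pose w := mkE (h:=projT1 u02) (ccomp (actm A (cid p2) erefl erefl b012) (projT2 (ab_comp1 u12 u01))).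
have Cw : Cond (v:=w) b012 by [].
have HY' : ccomp (actm A (cid p3) erefl erefl (vcomp (hcomp2 (id2 (projT1 u23)) b012)
                  (assoc (projT1 u23) (projT1 u12) (projT1 u01)))) (projT2 L)
  = projT2 (ab_comp1 u23 w).
  exact: (proj2_sig (ab_vcomp (ab_hcomp2 (ab_id2 u23) (exist _ b012 Cw : ab_cell (ab_comp1 u12 u01) w))
   (ab_assoc u23 u12 u01))).
have E1 : projT2 (ab_comp1 u23 w) = projT2 (ab_comp1 u23 u02).
  apply: (@monoP _ _ _ (actm A (cid p3) erefl erefl b023)).
  rewrite H023 -HY' (c_assoc PA) -actm_cid_comp -Hcoc.
  by rewrite !actm_cid_comp -!(c_assoc PA) (coc_H H123) H013 Ht.
rewrite /ab_comp1 /= in E1.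
move/monoP/monoP: E1 => E1.
by rewrite -E1.
Qed.

Lemma coc_0 (F01 : Faith (projT1 u01)) : Cond b012 -> Cond b013 -> Cond b023 -> Cond b123.
Proof.
move=> H012 H013 H023; rewrite /Cond in H012 H013 H023 *.
pose w := mkE (h:=projT1 u13) (ccomp (actm A (cid p3) erefl erefl b123) (projT2 (ab_comp1 u23 u12))).
have Cw : Cond (v:=w) b123 by [].
have HH : ccomp (actm A (cid p3) erefl erefl (hcomp2 b123 (id2 (projT1 u01)))) (projT2 L)
  = projT2 (ab_comp1 w u01).
  exact: (proj2_sig (ab_hcomp2 (exist _ b123 Cw : ab_cell (ab_comp1 u23 u12) w) (ab_id2 u01))).
have E1 : projT2 (ab_comp1 w u01) = projT2 (ab_comp1 u13 u01).
  apply: (@monoP _ _ _ (actm A (cid p3) erefl erefl b013)).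
  apply: (@monoP _ _ _ (actm A (cid p3) erefl erefl t)).
  rewrite H013 Ht -HH (c_assoc PA (actm A (cid p3) erefl erefl b013)) -actm_cid_comp (c_assoc PA) -actm_cid_comp Hcoc.
  by rewrite actm_cid_comp -(c_assoc PA) (coc_Y H012) H023.
rewrite /ab_comp1 /= in E1.
move/monoP/epiP/F01: E1 => E1.
by rewrite -E1.
Qed.

End Cocycle.

Section Dim2.
Variables (p0 p1 p2 : cob P).

Lemma fill02 (u01 : ab_hom A p0 p1) (u12 : ab_hom A p1 p2) (h : hom (mom A p0) (mom A p2))
  (be : cell (comp1 (projT1 u12) (projT1 u01)) h) :
  exists psi, Cond (v := mkE (h:=h) psi) be.
Proof. by exists (ccomp (actm A (cid p2) erefl erefl be) (projT2 (ab_comp1 u12 u01))). Qed.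

Lemma uniq02 (u01 : ab_hom A p0 p1) (u12 : ab_hom A p1 p2) (h : hom (mom A p0) (mom A p2))
  (be : cell (comp1 (projT1 u12) (projT1 u01)) h) psi psi' :
  Cond (v := mkE (h:=h) psi) be -> Cond (v := mkE (h:=h) psi') be -> psi = psi'.
Proof. by rewrite /Cond /= => <- <-. Qed.

Lemma fill01 (u12 : ab_hom A p1 p2) (u02 : ab_hom A p0 p2) (h : hom (mom A p0) (mom A p1))
  (be : cell (comp1 (projT1 u12) h) (projT1 u02)) :
  exists psi, Cond (u := mkE (h:=h) psi) be.
Proof.
rewrite /Cond /ab_comp1 /=.
have [c Hc] := solveP (ccomp (actm A (cid p2) erefl erefl be)
   (ccomp (kappa A p2 (projT1 u12) h erefl (mom_act A p2 (projT1 u12) erefl))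
       (actm A (projT2 u12) erefl (mom_act A p2 (projT1 u12) erefl) (id2 h)))) (projT2 u02).
by exists c; rewrite -Hc !(c_assoc PA).
Qed.

Lemma uniq01 (u12 : ab_hom A p1 p2) (u02 : ab_hom A p0 p2) (h : hom (mom A p0) (mom A p1))
  (be : cell (comp1 (projT1 u12) h) (projT1 u02)) psi psi' :
  Cond (u := mkE (h:=h) psi) be -> Cond (u := mkE (h:=h) psi') be -> psi = psi'.
Proof. by rewrite /Cond /ab_comp1 /= => H1; rewrite -H1 => /monoP/monoP/monoP. Qed.

Lemma fill12 (u01 : ab_hom A p0 p1) (u02 : ab_hom A p0 p2) (h : hom (mom A p1) (mom A p2))
  (be : cell (comp1 h (projT1 u01)) (projT1 u02)) (Fu : Full (projT1 u01)) :
  exists psi, Cond (w := mkE (h:=h) psi) be.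
Proof.
rewrite /Cond /ab_comp1 /=.
have [c Hc] := solveP (ccomp (actm A (cid p2) erefl erefl be)
   (kappa A p2 h (projT1 u01) erefl (mom_act A p2 h erefl))) (projT2 u02).
have [c' Hc'] := solvePr (projT2 u01) c.
have [a Ha] := Fu _ _ erefl (mom_act A p2 h erefl) c'.
by exists a; rewrite Ha Hc' -Hc !(c_assoc PA).
Qed.

Lemma uniq12 (u01 : ab_hom A p0 p1) (u02 : ab_hom A p0 p2) (h : hom (mom A p1) (mom A p2))
  (be : cell (comp1 h (projT1 u01)) (projT1 u02)) (Fa : Faith (projT1 u01)) psi psi' :
  Cond (w := mkE (h:=h) psi) be -> Cond (w := mkE (h:=h) psi') be -> psi = psi'.
Proof.
rewrite /Cond /ab_comp1 /= => H1; rewrite -H1 => /monoP/monoP/epiP H. symmetry. exact: (Fa _ _ _ _ _ _ H).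
Qed.
End Dim2.

End Act.


Set Implicit Arguments. Unset Strict Implicit. Unset Printing Implicit Defensive.

Lemma bumpE h i : bump h i = if h <= i then i.+1 else i.
Proof. by rewrite /bump; case: (h <= i). Qed.
Lemma unbumpE h i : unbump h i = if h < i then i.-1 else i.
Proof. by rewrite /unbump; case: (h < i); rewrite ?subn1 ?subn0. Qed.
Lemma leqT x y : (x <= y)%coq_nat -> (x <= y) = true. Proof. by move/leP. Qed.
Lemma leqF x y : ~ (x <= y)%coq_nat -> (x <= y) = false. Proof. by move=> H; apply/negbTE/negP => /leP. Qed.
Ltac natsimp :=
  rewrite ?bumpE ?unbumpE;
  repeat match goal with |- context [ if (?x <= ?y)%N then _ else _ ] =>
    lazymatch constr:((x, y)) with context [ if _ then _ else _ ] => fail | _ => idtac end;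
    first [ rewrite (@leqT x y); last by lia | rewrite (@leqF x y); last by lia
          | let H := fresh "Hc" in case: (@leP x y) => H ] end.

Section PosetGen.
Variables (N : nat) (D : BicatData) (X : HomData (PosetBicat N) D).

Lemma F1_idx (i j i' j' : 'I_N) (h : i <= j) (h' : i' <= j') :
  i = i' -> j = j' -> tot1 (@F1 _ _ X i j h) = tot1 (@F1 _ _ X i' j' h').
Proof. move=> E1 E2; subst i' j'. by rewrite (bool_irrelevance h h'). Qed.

Lemma Fc_idx (i j l i' j' l' : 'I_N) (f : i <= j) (g : j <= l) (f' : i' <= j') (g' : j' <= l') :
  i = i' -> j = j' -> l = l' -> tot2 (@Fcomp _ _ X i j l f g) = tot2 (@Fcomp _ _ X i' j' l' f' g').
Proof. move=> E1 E2 E3; subst. by rewrite (bool_irrelevance f f') (bool_irrelevance g g'). Qed.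

Lemma F2_tot (HX : isHom X) (i j : 'I_N) (h1 h2 : i <= j) (a : @cell (PosetBicat N) i j h1 h2) :
  tot2 (F2 X a) = tot2 (id2 (@F1 _ _ X i j h1)).
Proof.
move: a; rewrite -(bool_irrelevance h1 h2) => a; case: a.
by rewrite -(F2_id HX).
Qed.

Lemma F2_eq (HX : isHom X) (i j : 'I_N) (h1 : i <= j) (a : @cell (PosetBicat N) i j h1 h1) :
  F2 X a = id2 (@F1 _ _ X i j h1).
Proof. by case: a; rewrite -(F2_id HX). Qed.

Lemma vF2_tot (HX : isHom X) (hv : forall (x y : ob D) (f g : hom x y) (a : cell f g), vcomp (id2 g) a = a)
  (i j : 'I_N) (h1 h2 : i <= j) (a : @cell (PosetBicat N) i j h1 h2) (f : @hom D (F0 X i) (F0 X j))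
  (c : @cell D (F0 X i) (F0 X j) f (@F1 _ _ X i j h1)) :
  tot2 (@vcomp D _ _ _ _ _ (F2 X a) c) = tot2 c.
Proof.
move: a; rewrite -(bool_irrelevance h1 h2) => a.
by rewrite (F2_eq HX) hv.
Qed.

Lemma Funit_tot (HN : isNormal X) x : tot2 (Funit X x) = tot2 (id2 (id1 (F0 X x))).
Proof.
case: (HN x) => e ->.
move: e; move: (F1 X (id1 x)) => u e; subst u.
done.
Qed.
End PosetGen.

Lemma simp_id (a b v : nat) : a < b -> v != a -> v != b ->
  bump a (unbump a (unbump b v)) = unbump b v /\ bump b.-1 (unbump a (unbump b v)) = unbump a v.
Proof.
move=> ab va vb.
have {}va : v <> a by move/eqP: va.
have {}vb : v <> b by move/eqP: vb.
move/ltP: ab => ab.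
case: (ltngtP v a) => [/ltP H1|/ltP H1|/esym H1 //]; case: (ltngtP v b) => [/ltP H2|/ltP H2|/esym H2 //]; natsimp; lia.
Qed.

Section Horn.
Variables (B : Bicat) (P : Cat) (A : RightAction B P).
Local Notation E := (ActionBicat A).
Let BA := baxioms B.
Variables (s : nat) (k : 'I_s.+3)
  (hrn : forall j : 'I_s.+3, j != k -> Nerve E s.+2) (y : Nerve B s.+3).
Hypothesis Hc : forall (i j : 'I_s.+3) (hi : i != k) (hj : j != k), i < j ->
  dface (inord i) (proj1_sig (@hrn j hj)) = dface (inord j.-1) (proj1_sig (@hrn i hi)).
Hypothesis Hp : forall (j : 'I_s.+3) (hj : j != k),
  compH (projH A) (proj1_sig (@hrn j hj)) = dface j (proj1_sig y).

Definition Hf (j : 'I_s.+3) (hj : j != k) := proj1_sig (@hrn j hj).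
Definition fi (m v : 'I_s.+3) : 'I_s.+2 := inord (unbump m v).

Lemma Hf_pi j (h1 h2 : j != k) : Hf h1 = Hf h2.
Proof. by rewrite (bool_irrelevance h1 h2). Qed.

Lemma fi_val (m v : 'I_s.+3) : v != m -> val (fi m v) = unbump m v.
Proof.
move=> vm; rewrite /fi /= inordK //.
have Hv := ltn_ord v; have Hm := ltn_ord m.
have vm' : nat_of_ord v <> nat_of_ord m by move=> E; move/eqP: vm; apply; apply: val_inj.
clear vm; move: (nat_of_ord v) (nat_of_ord m) Hv Hm vm' => a b /ltP H1 /ltP H2 vm'.
natsimp; apply/ltP; lia.
Qed.

Lemma lift_fi (m v : 'I_s.+3) : v != m -> lift m (fi m v) = v.
Proof.
move=> vm; apply: val_inj; rewrite /= fi_val //.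
have Hv := ltn_ord v; have Hm := ltn_ord m.
have vm' : nat_of_ord v <> nat_of_ord m by move=> E; move/eqP: vm; apply; apply: val_inj.
clear vm; move: (nat_of_ord v) (nat_of_ord m) Hv Hm vm' => a b /ltP H1 /ltP H2 vm'.
natsimp; lia.
Qed.

Lemma fi_lift (m : 'I_s.+3) (a : 'I_s.+2) : fi m (lift m a) = a.
Proof.
apply: val_inj; rewrite fi_val; last by rewrite lift_eqF.
by rewrite /= bumpK.
Qed.

Lemma fi_mono (m v w : 'I_s.+3) : v != m -> w != m -> v <= w -> fi m v <= fi m w.
Proof.
move=> vm wm vw; rewrite fi_val // fi_val //.
move: vw; move: (nat_of_ord v) (nat_of_ord w) (nat_of_ord m) => a b c /leP vw.
natsimp; apply/leP; lia.
Qed.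

Lemma idxA (a b v : 'I_s.+3) : a < b -> v != a -> v != b ->
  lift (inord a : 'I_s.+2) (inord (unbump a (unbump b v)) : 'I_s.+1) = fi b v.
Proof.
move=> ab va vb; apply: val_inj; rewrite /= fi_val //.
have Hv := ltn_ord v; have Hb := ltn_ord b.
have va' : nat_of_ord v <> nat_of_ord a by move=> E; move/eqP: va; apply; apply: val_inj.
have vb' : nat_of_ord v <> nat_of_ord b by move=> E; move/eqP: vb; apply; apply: val_inj.
rewrite inordK; last by move: ab Hv Hb va' vb'; move: (nat_of_ord v) (nat_of_ord a) (nat_of_ord b) => x u w /ltP ? /ltP ? /ltP ? ? ?; apply/ltP; lia.
rewrite inordK; last first.
  move: ab Hv Hb va' vb'; move: (nat_of_ord v) (nat_of_ord a) (nat_of_ord b) => x u w /ltP ? /ltP ? /ltP ? ? ?.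
  natsimp; apply/ltP; lia.
by case: (simp_id ab va vb).
Qed.

Lemma idxB (a b v : 'I_s.+3) : a < b -> v != a -> v != b ->
  lift (inord b.-1 : 'I_s.+2) (inord (unbump a (unbump b v)) : 'I_s.+1) = fi a v.
Proof.
move=> ab va vb; apply: val_inj; rewrite /= fi_val //.
have Hv := ltn_ord v; have Hb := ltn_ord b.
have va' : nat_of_ord v <> nat_of_ord a by move=> E; move/eqP: va; apply; apply: val_inj.
have vb' : nat_of_ord v <> nat_of_ord b by move=> E; move/eqP: vb; apply; apply: val_inj.
rewrite inordK; last by move: ab Hv Hb va' vb'; move: (nat_of_ord v) (nat_of_ord a) (nat_of_ord b) => x u w /ltP ? /ltP ? /ltP ? ? ?; apply/ltP; lia.
rewrite inordK; last first.
  move: ab Hv Hb va' vb'; move: (nat_of_ord v) (nat_of_ord a) (nat_of_ord b) => x u w /ltP ? /ltP ? /ltP ? ? ?.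
  natsimp; apply/ltP; lia.
by case: (simp_id ab va vb).
Qed.

Lemma idx_mono (a b v w : 'I_s.+3) : a < b -> v != a -> v != b -> w != a -> w != b -> v <= w ->
  (inord (unbump a (unbump b v)) : 'I_s.+1) <= (inord (unbump a (unbump b w)) : 'I_s.+1).
Proof.
move=> ab va vb wa wb vw.
have Hv := ltn_ord v; have Hw := ltn_ord w; have Hb := ltn_ord b.
have va' : nat_of_ord v <> nat_of_ord a by move=> E; move/eqP: va; apply; apply: val_inj.
have vb' : nat_of_ord v <> nat_of_ord b by move=> E; move/eqP: vb; apply; apply: val_inj.
have wa' : nat_of_ord w <> nat_of_ord a by move=> E; move/eqP: wa; apply; apply: val_inj.
have wb' : nat_of_ord w <> nat_of_ord b by move=> E; move/eqP: wb; apply; apply: val_inj.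
clear va vb wa wb.
move: ab Hv Hw Hb va' vb' wa' wb' vw; move: (nat_of_ord v) (nat_of_ord w) (nat_of_ord a) (nat_of_ord b)
  => x z u t /ltP ? /ltP ? /ltP ? /ltP ? ? ? ? ? /leP ?.
rewrite /= inordK; last by natsimp; apply/ltP; lia.
rewrite inordK; last by natsimp; apply/ltP; lia.
natsimp; apply/leP; lia.
Qed.

Lemma ord_neq_sym (n : nat) (a b : 'I_n) : a != b -> b != a.
Proof. by rewrite eq_sym. Qed.

Lemma VC (a b : 'I_s.+3) (ha : a != k) (hb : b != k) (v : 'I_s.+3) :
  v != a -> v != b -> F0 (Hf ha) (fi a v) = F0 (Hf hb) (fi b v).
Proof.
wlog ab : a b ha hb / a < b.
  move=> W va vb; case: (ltngtP a b) => [ab|ba|ab].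
  - exact: W.
  - symmetry; exact: W.
  - have E : a = b by apply: val_inj.
    subst b; by rewrite (Hf_pi ha hb).
move=> va vb.
have := hp0 (Hc ha hb ab) (inord (unbump a (unbump b v))) => /= E.
by rewrite -(idxA ab va vb) -(idxB ab va vb) E.
Qed.

Lemma EC (a b : 'I_s.+3) (ha : a != k) (hb : b != k) (v w : 'I_s.+3)
  (h1 : fi a v <= fi a w) (h2 : fi b v <= fi b w) :
  v <= w -> v != a -> v != b -> w != a -> w != b ->
  tot1 (F1 (Hf ha) (h1 : @hom (PosetBicat s.+2) _ _)) = tot1 (F1 (Hf hb) (h2 : @hom (PosetBicat s.+2) _ _)).
Proof.
wlog ab : a b ha hb h1 h2 / a < b.
  move=> W vw va vb wa wb; case: (ltngtP a b) => [ab|ba|ab].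
  - exact: W.
  - symmetry; exact: W.
  - have E : a = b by apply: val_inj.
    subst b; rewrite (Hf_pi ha hb); exact: F1_idx.
move=> vw va vb wa wb.
have h := idx_mono ab va vb wa wb vw.
have := @hp1 _ _ _ _ (Hc ha hb ab) _ _ h => /= E.
rewrite (F1_idx _ h1 (lift_mono (inord b.-1) h) (esym (idxB ab va vb)) (esym (idxB ab wa wb))).
rewrite -E.
exact: F1_idx (idxA ab va vb) (idxA ab wa wb).
Qed.

Lemma VB (j : 'I_s.+3) (hj : j != k) (a : 'I_s.+2) :
  mom A (F0 (Hf hj) a) = F0 (sval y) (lift j a).
Proof. exact: (hp0 (Hp hj) a). Qed.

Lemma EB (j : 'I_s.+3) (hj : j != k) (a b : 'I_s.+2) (h : a <= b) :
  tot1 (projT1 (@F1 _ _ (Hf hj) a b h)) = tot1 (@F1 _ _ (sval y) _ _ (lift_mono j h)).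
Proof. exact: (hp1 (Hp hj) h). Qed.

Lemma CB (j : 'I_s.+3) (hj : j != k) (a b c : 'I_s.+2) (f : a <= b) (g : b <= c) :
  tot2 (proj1_sig (@Fcomp _ _ (Hf hj) a b c f g))
  = tot2 (@Fcomp _ _ (sval y) _ _ _ (lift_mono j f) (lift_mono j g)).
Proof.
have := hpc (Hp hj) f g => /=.
rewrite (v_idr BA) => ->.
apply: (vF2_tot (proj2_sig y).1).
exact: (v_idl BA).
Qed.

End Horn.

Lemma avoid (N : nat) (l : seq 'I_N) : size l < N -> exists m : 'I_N, m \notin l.
Proof.
move=> H.
have E := cardC (mem l); rewrite card_ord in E.
have Hs := card_size l.
have : 0 < #|[predC l]|.
  rewrite -(ltn_add2l #|l|) addn0 E.
  exact: (leq_ltn_trans Hs H).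
case/card_gt0P => m; rewrite inE => Hm; by exists m.
Qed.


Unset Implicit Arguments.

Section Constr.
Variables (B : Bicat) (P : Cat) (A : RightAction B P).
Local Notation E := (ActionBicat A).
Local Notation PB := PosetBicat.
Let BA := baxioms B.
Let PA := caxioms P.
Hypotheses (HB : isBigroupoid B) (HP : isGroupoid P).
Variables (s : nat) (k : 'I_s.+3) (hrn : forall j : 'I_s.+3, j != k -> Nerve E s.+2).
Variable F0x : 'I_s.+3 -> cob P.
Variables
 (y1 : forall (i j : 'I_s.+3), @hom (PB s.+3) i j -> @hom B (mom A (F0x i)) (mom A (F0x j)))
 (y2 : forall (i j : 'I_s.+3) (f g : @hom (PB s.+3) i j), @cell (PB s.+3) i j f g -> cell (y1 i j f) (y1 i j g))
 (yc : forall (i j l : 'I_s.+3) (f : @hom (PB s.+3) i j) (g : @hom (PB s.+3) j l),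
     cell (comp1 (y1 j l g) (y1 i j f)) (y1 i l (comp1 g f)))
 (yu : forall i : 'I_s.+3, cell (id1 (mom A (F0x i))) (y1 i i (@id1 (PB s.+3) i))).
Definition Y : HomData (PB s.+3) B := Build_HomData (PB s.+3) B (fun v => mom A (F0x v)) y1 y2 yc yu.
Hypotheses (YH : isHom Y) (YN : isNormal Y).
Hypothesis Hc : forall (i j : 'I_s.+3) (hi : i != k) (hj : j != k), i < j ->
  dface (inord i) (proj1_sig (hrn j hj)) = dface (inord j.-1) (proj1_sig (hrn i hi)).
Hypothesis Hp : forall (j : 'I_s.+3) (hj : j != k),
  compH (projH A) (proj1_sig (hrn j hj)) = dface j Y.
Hypothesis HF0 : forall (v m : 'I_s.+3) (hm : m != k), m != v -> F0 (Hf hrn hm) (fi m v) = F0x v.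

Let yN : Nerve B s.+3 := exist _ Y (conj YH YN).

Definition Psi_t (i j : 'I_s.+3) (h : i <= j) := chom (F0x i) (act A (F0x j) (y1 i j h) erefl).

Definition FaceSpec (i j : 'I_s.+3) (h : i <= j) (psi : Psi_t i j h) : Prop :=
  forall (m : 'I_s.+3) (hm : m != k) (h' : fi m i <= fi m j), m != i -> m != j ->
    etot (mkE psi) = @tot1 E _ _ (@F1 _ _ (Hf hrn hm) _ _ h').

Definition Good (a b : 'I_s.+3) (hab : a <= b) (pe : Psi_t a b hab)
   (i j : 'I_s.+3) (h : i <= j) (psi : Psi_t i j h) : Prop :=
  FaceSpec a b hab pe /\ (a = i -> b = j -> etot (mkE pe) = etot (mkE psi)).

Definition TriSpec (i j : 'I_s.+3) (h : i <= j) (psi : Psi_t i j h) : Prop :=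
  forall (a b c : 'I_s.+3) (hab : a <= b) (hbc : b <= c), a < b -> b < c ->
  forall pab pbc pac, Good a b hab pab i j h psi -> Good b c hbc pbc i j h psi ->
    Good a c (leq_trans hab hbc) pac i j h psi ->
    @Cond B P A _ _ _ (mkE pab) (mkE pbc) (mkE pac) (yc a b c hab hbc).

Definition NoFace (i j : 'I_s.+3) : Prop := forall m : 'I_s.+3, m != k -> (m == i) || (m == j).

Definition Spec (i j : 'I_s.+3) (h : i <= j) (psi : Psi_t i j h) : Prop :=
  FaceSpec i j h psi /\ (NoFace i j -> TriSpec i j h psi).

Lemma EBx (m : 'I_s.+3) (hm : m != k) (i j : 'I_s.+3) (h : i <= j) (h' : fi m i <= fi m j) :
  m != i -> m != j -> tot1 (projT1 (@F1 _ _ (Hf hrn hm) _ _ h')) = tot1 (y1 i j h).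
Proof.
move=> mi mj.
rewrite (@EB _ _ _ _ _ _ yN Hp m hm _ _ h') /=.
apply: (@F1_idx _ _ Y); apply: lift_fi; by rewrite eq_sym.
Qed.

Lemma face_edge (i j : 'I_s.+3) (h : i <= j) (m : 'I_s.+3) (hm : m != k) :
  m != i -> m != j -> exists psi, FaceSpec i j h psi.
Proof.
move=> mi mj.
have h' : fi m i <= fi m j by apply: fi_mono => //; rewrite eq_sym.
have [psi Hpsi] := retype (u' := @F1 _ _ (Hf hrn hm) _ _ h') (h := y1 i j h)
   (HF0 i m hm mi) (HF0 j m hm mj) (EBx m hm i j h h' mi mj).
exists psi => m' hm' h'' m'i m'j.
rewrite Hpsi.
apply: (EC Hc) => //; by rewrite eq_sym.
Qed.

Lemma face_pin (i j : 'I_s.+3) (h : i <= j) (p1 p2 : Psi_t i j h) (m : 'I_s.+3) (hm : m != k) :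
  m != i -> m != j -> FaceSpec i j h p1 -> FaceSpec i j h p2 -> p1 = p2.
Proof.
move=> mi mj H1 H2.
have h' : fi m i <= fi m j by apply: fi_mono => //; rewrite eq_sym.
apply: mkE_inj; rewrite (H1 m hm h' mi mj) (H2 m hm h' mi mj); done.
Qed.

Lemma sort3 (n : nat) (x y z p q r : 'I_n) : x < y -> y < z -> p < q -> q < r ->
  [|| p == x, p == y | p == z] -> [|| q == x, q == y | q == z] -> [|| r == x, r == y | r == z] ->
  [/\ p = x, q = y & r = z].
Proof.
move=> /ltP h1 /ltP h2 /ltP h3 /ltP h4 H1 H2 H3.
have E1 : (p:nat) = x \/ (p:nat) = y \/ (p:nat) = z by case/or3P: H1 => /eqP ->; auto.
have E2 : (q:nat) = x \/ (q:nat) = y \/ (q:nat) = z by case/or3P: H2 => /eqP ->; auto.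
have E3 : (r:nat) = x \/ (r:nat) = y \/ (r:nat) = z by case/or3P: H3 => /eqP ->; auto.
have [e1 [e2 e3]] : (p:nat) = x /\ (q:nat) = y /\ (r:nat) = z by lia.
by split; apply: val_inj.
Qed.

Lemma noface_facts (i j : 'I_s.+3) : i <= j -> NoFace i j ->
  [/\ i < j, i != k, j != k & forall m : 'I_s.+3, [|| m == i, m == j | m == k]].
Proof.
move=> ij NF.
have Hall : forall m : 'I_s.+3, [|| m == i, m == j | m == k].
  move=> m; case: (boolP (m == k)) => mk; first by rewrite !orbT.
  by case/orP: (NF m mk) => ->; rewrite ?orbT.
have ik : i != k.
  apply/negP => /eqP ik; subst i.
  have [m] := @avoid _ [:: k; j] (ltac:(by [])).
  rewrite !inE negb_or => /andP [mk mj].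
  by move: (NF m mk); rewrite (negbTE mk) (negbTE mj).
have jk : j != k.
  apply/negP => /eqP jk; subst j.
  have [m] := @avoid _ [:: k; i] (ltac:(by [])).
  rewrite !inE negb_or => /andP [mk mi].
  by move: (NF m mk); rewrite (negbTE mk) (negbTE mi).
have lt_ij : i < j.
  rewrite ltn_neqAle ij andbT; apply/negP => /eqP ij'.
  have E : i = j by apply: val_inj.
  subst j.
  have [m] := @avoid _ [:: k; i] (ltac:(by [])).
  rewrite !inE negb_or => /andP [mk mi].
  by move: (NF m mk); rewrite (negbTE mi).
by split.
Qed.

Lemma exPsi (i j : 'I_s.+3) (h : i <= j) : exists psi, Spec i j h psi.
Proof.
case: (boolP [exists m, (m != k) && (m != i) && (m != j)]) =>
  [/existsP [m /andP [/andP [mk mi] mj]] | Hno].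
  have [psi Hpsi] := face_edge i j h m mk mi mj.
  exists psi; split => // NF.
  by move: (NF m mk); rewrite (negbTE mi) (negbTE mj).
have NF : NoFace i j.
  move=> m mk; move: Hno; rewrite negb_exists => /forallP /(_ m).
  by rewrite mk /= negb_and !negbK.
have [lt_ij ik jk Hall] := noface_facts i j h NF.
have FSv : forall psi, FaceSpec i j h psi.
  move=> psi m hm h' mi mj; exfalso.
  by move: (NF m hm); rewrite (negbTE mi) (negbTE mj).
have [ki | kj_i] := ltnP k i.
- (* k < i < j : the missing edge is (1,2) of the triangle (k,i,j) *)
  have hki : k <= i by exact: ltnW.
  have ki' : k != i by rewrite neq_ltn ki.
  have kj : k < j by exact: ltn_trans ki lt_ij.
  have [p01 H01] := face_edge k i hki j jk (ltac:(by rewrite neq_ltn kj orbT))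
     (ltac:(by rewrite neq_ltn lt_ij orbT)).
  have [p02 H02] := face_edge k j (leq_trans hki h) i ik (ltac:(by rewrite neq_ltn ki orbT))
     (ltac:(by rewrite neq_ltn lt_ij)).
  have Fu := (equiv_faith_full A HP HB (y1 k i hki)).2.
  have [psi Hpsi] := fill12 HP (u01 := mkE p01) (u02 := mkE p02) (h := y1 i j h) (yc k i j hki h) Fu.
  exists psi; split => // _ a b c hab hbc ab bc pab pbc pac [Fab Gab] [Fbc Gbc] [Fac Gac].
  have [ea eb ec] := sort3 _ _ _ _ _ _ _ ki lt_ij ab bc
    (ltac:(by case/or3P: (Hall a) => ->; rewrite ?orbT))
    (ltac:(by case/or3P: (Hall b) => ->; rewrite ?orbT))
    (ltac:(by case/or3P: (Hall c) => ->; rewrite ?orbT)).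
  subst a b c.
  rewrite (bool_irrelevance hab hki) in pab Fab Gab pac Fac Gac *.
  rewrite (bool_irrelevance hbc h) in pbc Fbc Gbc pac Fac Gac *.
  have -> : pab = p01 by apply: (face_pin _ _ _ _ _ j jk); rewrite ?neq_ltn ?kj ?lt_ij ?orbT.
  have -> : pac = p02 by apply: (face_pin _ _ _ _ _ i ik); rewrite ?neq_ltn ?ki ?lt_ij ?orbT.
  have -> : pbc = psi by apply: mkE_inj; apply: Gbc.
  exact: Hpsi.
have ik' : i < k by rewrite ltn_neqAle ik kj_i.
have [kj | jk'] := ltnP k j.
- (* i < k < j : the missing edge is (0,2) of the triangle (i,k,j) *)
  have hik : i <= k by exact: ltnW.
  have hkj : k <= j by exact: ltnW.
  have E := bool_irrelevance h (leq_trans hik hkj); subst h.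
  have [p01 H01] := face_edge i k hik j jk (ltac:(by rewrite neq_ltn lt_ij orbT))
     (ltac:(by rewrite neq_ltn kj orbT)).
  have [p12 H12] := face_edge k j hkj i ik (ltac:(by rewrite neq_ltn ik'))
     (ltac:(by rewrite neq_ltn lt_ij)).
  have [psi Hpsi] := fill02 (u01 := mkE p01) (u12 := mkE p12)
     (h := y1 i j (leq_trans hik hkj)) (yc i k j hik hkj).
  exists psi; split => // _ a b c hab hbc ab bc pab pbc pac [Fab Gab] [Fbc Gbc] [Fac Gac].
  have [ea eb ec] := sort3 _ _ _ _ _ _ _ ik' kj ab bc
    (ltac:(by case/or3P: (Hall a) => ->; rewrite ?orbT))
    (ltac:(by case/or3P: (Hall b) => ->; rewrite ?orbT))
    (ltac:(by case/or3P: (Hall c) => ->; rewrite ?orbT)).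
  subst a b c.
  rewrite (bool_irrelevance hab hik) in pab Fab Gab pac Fac Gac *.
  rewrite (bool_irrelevance hbc hkj) in pbc Fbc Gbc pac Fac Gac *.
  have -> : pab = p01 by apply: (face_pin _ _ _ _ _ j jk); rewrite ?neq_ltn ?kj ?lt_ij ?orbT.
  have -> : pbc = p12 by apply: (face_pin _ _ _ _ _ i ik); rewrite ?neq_ltn ?ik' ?lt_ij ?orbT.
  have -> : pac = psi by apply: mkE_inj; apply: Gac.
  exact: Hpsi.
have jk'' : j < k by rewrite ltn_neqAle jk' andbT.
(* i < j < k : the missing edge is (0,1) of the triangle (i,j,k) *)
have hjk : j <= k by exact: ltnW.
have [p12 H12] := face_edge j k hjk i ik (ltac:(by rewrite neq_ltn lt_ij))
   (ltac:(by rewrite neq_ltn ik')).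
have [p02 H02] := face_edge i k (leq_trans h hjk) j jk (ltac:(by rewrite neq_ltn lt_ij orbT))
   (ltac:(by rewrite neq_ltn jk'')).
have [psi Hpsi] := fill01 HP (u12 := mkE p12) (u02 := mkE p02) (h := y1 i j h) (yc i j k h hjk).
exists psi; split => // _ a b c hab hbc ab bc pab pbc pac [Fab Gab] [Fbc Gbc] [Fac Gac].
have [ea eb ec] := sort3 _ _ _ _ _ _ _ lt_ij jk'' ab bc
  (ltac:(by case/or3P: (Hall a) => ->; rewrite ?orbT))
  (ltac:(by case/or3P: (Hall b) => ->; rewrite ?orbT))
  (ltac:(by case/or3P: (Hall c) => ->; rewrite ?orbT)).
subst a b c.
rewrite (bool_irrelevance hab h) in pab Fab Gab pac Fac Gac *.
rewrite (bool_irrelevance hbc hjk) in pbc Fbc Gbc pac Fac Gac *.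
have -> : pbc = p12 by apply: (face_pin _ _ _ _ _ i ik); rewrite ?neq_ltn ?ik' ?lt_ij ?orbT.
have -> : pac = p02 by apply: (face_pin _ _ _ _ _ j jk); rewrite ?neq_ltn ?jk'' ?lt_ij ?orbT.
have -> : pab = psi by apply: mkE_inj; apply: Gab.
exact: Hpsi.
Qed.


Section WithPsi.
Variable Psi : forall (i j : 'I_s.+3) (h : i <= j), Psi_t i j h.
Hypothesis HPsi : forall i j h, Spec i j h (Psi i j h).

Definition F1x (i j : 'I_s.+3) (h : @hom (PB s.+3) i j) : ab_hom A (F0x i) (F0x j) := mkE (Psi i j h).

Lemma F1x_pi (i j : 'I_s.+3) (h h' : i <= j) : F1x i j h = F1x i j h'.
Proof. by rewrite (bool_irrelevance h h'). Qed.

Lemma ex_norm (i : 'I_s.+3) (h : i <= i) : F1x i i h = ab_id1 A (F0x i).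
Proof.
have [m] := @avoid _ [:: k; i] (ltac:(by [])).
rewrite !inE negb_or => /andP [mk mi].
have h' : fi m i <= fi m i by [].
apply: etot_inj; rewrite /F1x ((HPsi i i h).1 m mk h' mi mi).
rewrite (F1_pi (Hf hrn mk) h' (leqnn _)).
case: ((proj2_sig (hrn m mk)).2 (fi m i)) => e _.
rewrite /= in e; rewrite [X in @tot1 _ _ _ X = _]e.
by apply: etot_id1; apply: HF0.
Qed.

Definition CondX (a b c : 'I_s.+3) (hab : a <= b) (hbc : b <= c) : Prop :=
  @Cond B P A _ _ _ (F1x a b hab) (F1x b c hbc) (F1x a c (leq_trans hab hbc)) (yc a b c hab hbc).

Lemma cond_F2 (i j : 'I_s.+3) (p1 p2 : i <= j) (a : @cell (PB s.+3) i j p1 p2) :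
  ccomp (actm A (cid (F0x j)) erefl erefl (y2 i j p1 p2 a)) (Psi i j p1) = Psi i j p2.
Proof.
have E := bool_irrelevance p2 p1; subst p2.
have -> : y2 i j p1 p1 a = id2 (y1 i j p1) := F2_eq YH a.
rewrite actm_id; exact: (c_idl PA).
Qed.

Lemma cond_face (a b c : 'I_s.+3) (hab : a <= b) (hbc : b <= c) (m : 'I_s.+3) (hm : m != k) :
  m != a -> m != b -> m != c -> CondX a b c hab hbc.
Proof.
move=> ma mb mc.
set X := Hf hrn hm.
have f' : fi m a <= fi m b by apply: fi_mono => //; rewrite eq_sym.
have g' : fi m b <= fi m c by apply: fi_mono => //; rewrite eq_sym.
have HX : @Cond B P A _ _ _ (@F1 _ _ X _ _ f') (@F1 _ _ X _ _ g') (@F1 _ _ X _ _ (leq_trans f' g'))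
    (proj1_sig (@Fcomp _ _ X _ _ _ f' g')) := proj2_sig (@Fcomp _ _ X _ _ _ f' g').
apply: (cond_transfer _ _ _ _ HX).
- by rewrite ((HPsi a b hab).1 m hm f' ma mb).
- by rewrite ((HPsi b c hbc).1 m hm g' mb mc).
- by rewrite ((HPsi a c (leq_trans hab hbc)).1 m hm (leq_trans f' g') ma mc).
- rewrite (@CB _ _ _ _ _ _ yN Hp m hm _ _ _ f' g') /=.
  apply: (@Fc_idx _ _ Y); apply: lift_fi; by rewrite eq_sym.
Qed.


Lemma y2_match (i j : 'I_s.+3) (p1 p2 : i <= j) (a : @cell (PB s.+3) i j p1 p2)
  (ev : F1x i j p1 = F1x i j p2) :
  y2 i j p1 p2 a = match ev in _ = g return cell (projT1 (F1x i j p1)) (projT1 g) with erefl => id2 _ end.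
Proof.
have E := bool_irrelevance p2 p1; subst p2.
rewrite (proof_irrelevance _ ev erefl) /=.
exact: (F2_eq YH a).
Qed.

Lemma yu_match (i : 'I_s.+3) (e : projT1 (F1x i i (leqnn i)) = projT1 (ab_id1 A (F0x i))) :
  yu i = match esym e in _ = g return cell (id1 (mom A (F0x i))) g with erefl => id2 _ end.
Proof.
case: (YN i) => e' He'.
rewrite (proof_irrelevance _ e e').
exact: He'.
Qed.

Lemma cond_deg1 (i l : 'I_s.+3) (h1 : i <= i) (h2 : i <= l) : CondX i i l h1 h2.
Proof.
have E := bool_irrelevance h1 (leqnn i); subst h1.
apply: (cond_runit (e := ex_norm i (leqnn i)) (ev := F1x_pi i l (leq_trans (leqnn i) h2) h2)).
rewrite -(yu_match i) -(y2_match i l (leq_trans (leqnn i) h2) h2 (@runit (PB s.+3) i l h2)).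
exact (@F_runit _ _ _ YH i l h2).
Qed.

Lemma cond_deg2 (i l : 'I_s.+3) (h1 : i <= l) (h2 : l <= l) : CondX i l l h1 h2.
Proof.
have E := bool_irrelevance h2 (leqnn l); subst h2.
apply: (cond_lunit (e := ex_norm l (leqnn l)) (ev := F1x_pi i l (leq_trans h1 (leqnn l)) h1)).
rewrite -(yu_match l) -(y2_match i l (leq_trans h1 (leqnn l)) h1 (@lunit (PB s.+3) i l h1)).
exact (@F_lunit _ _ _ YH i l h1).
Qed.


Lemma ltn_neq' (x y : 'I_s.+3) : x < y -> x != y.
Proof. by rewrite neq_ltn => ->. Qed.
Lemma gtn_neq' (x y : 'I_s.+3) : y < x -> x != y.
Proof. by rewrite neq_ltn => ->; rewrite orbT. Qed.

Ltac neqs := first [ apply: ltn_neq'; by eauto using ltn_trans | apply: gtn_neq'; by eauto using ltn_trans ].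

Lemma coc_case0 (a b c : 'I_s.+3) (hab : a <= b) (hbc : b <= c) :
  k < a -> a < b -> b < c -> CondX a b c hab hbc.
Proof.
move=> ka ab bc.
have f : k <= a by exact: ltnW.
have kb : k < b by exact: ltn_trans ka ab.
have kc : k < c by exact: ltn_trans kb bc.
have ac : a < c by exact: ltn_trans ab bc.
have H012 := cond_face k a b f hab c (gtn_neq' _ _ kc) (gtn_neq' _ _ kc) (gtn_neq' _ _ ac) (gtn_neq' _ _ bc).
have H013 := cond_face k a c f (leq_trans hab hbc) b (gtn_neq' _ _ kb) (gtn_neq' _ _ kb) (gtn_neq' _ _ ab) (ltn_neq' _ _ bc).
have H023 := cond_face k b c (leq_trans f hab) hbc a (gtn_neq' _ _ ka) (gtn_neq' _ _ ka) (ltn_neq' _ _ ab) (ltn_neq' _ _ ac).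
have Ht := cond_F2 k c _ _ (@assoc (PB s.+3) k a b c hbc hab f).
have Hcoc := @F_assoc _ _ _ YH k a b c f hab hbc.
have Fa := (equiv_faith_full A HP HB (y1 k a f)).1.
exact: (coc_0 HP (u01 := F1x k a f) (u12 := F1x a b hab) (u23 := F1x b c hbc)
  (u02 := F1x k b (leq_trans f hab)) (u13 := F1x a c (leq_trans hab hbc))
  (u03 := F1x k c (leq_trans f (leq_trans hab hbc))) (u03' := F1x k c (leq_trans (leq_trans f hab) hbc))
  (b012 := yc k a b f hab) (b123 := yc a b c hab hbc) (b013 := yc k a c f (leq_trans hab hbc))
  (b023 := yc k b c (leq_trans f hab) hbc) Ht Hcoc Fa H012 H013 H023).
Qed.

Lemma coc_case1 (a b c : 'I_s.+3) (hab : a <= b) (hbc : b <= c) :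
  a < k -> k < b -> b < c -> CondX a b c hab hbc.
Proof.
move=> ak kb bc.
have f : a <= k by exact: ltnW.
have g : k <= b by exact: ltnW.
have E := bool_irrelevance hab (leq_trans f g); subst hab.
have ab : a < b by exact: ltn_trans ak kb.
have kc : k < c by exact: ltn_trans kb bc.
have ac : a < c by exact: ltn_trans ab bc.
have H012 := cond_face a k b f g c (gtn_neq' _ _ kc) (gtn_neq' _ _ ac) (gtn_neq' _ _ kc) (gtn_neq' _ _ bc).
have H123 := cond_face k b c g hbc a (ltn_neq' _ _ ak) (ltn_neq' _ _ ak) (ltn_neq' _ _ ab) (ltn_neq' _ _ ac).
have H013 := cond_face a k c f (leq_trans g hbc) b (gtn_neq' _ _ kb) (gtn_neq' _ _ ab) (gtn_neq' _ _ kb) (ltn_neq' _ _ bc).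
have Ht := cond_F2 a c _ _ (@assoc (PB s.+3) a k b c hbc g f).
have Hcoc := @F_assoc _ _ _ YH a k b c f g hbc.
exact: (coc_1 (u01 := F1x a k f) (u12 := F1x k b g) (u23 := F1x b c hbc)
  (u02 := F1x a b (leq_trans f g)) (u13 := F1x k c (leq_trans g hbc))
  (u03 := F1x a c (leq_trans f (leq_trans g hbc))) (u03' := F1x a c (leq_trans (leq_trans f g) hbc))
  (b012 := yc a k b f g) (b123 := yc k b c g hbc) (b013 := yc a k c f (leq_trans g hbc))
  (b023 := yc a b c (leq_trans f g) hbc) Ht Hcoc H012 H123 H013).
Qed.

Lemma coc_case2 (a b c : 'I_s.+3) (hab : a <= b) (hbc : b <= c) :
  a < b -> b < k -> k < c -> CondX a b c hab hbc.
Proof.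
move=> ab bk kc.
have g : b <= k by exact: ltnW.
have h : k <= c by exact: ltnW.
have E := bool_irrelevance hbc (leq_trans g h); subst hbc.
have ak : a < k by exact: ltn_trans ab bk.
have bc : b < c by exact: ltn_trans bk kc.
have ac : a < c by exact: ltn_trans ab bc.
have H012 := cond_face a b k hab g c (gtn_neq' _ _ kc) (gtn_neq' _ _ ac) (gtn_neq' _ _ bc) (gtn_neq' _ _ kc).
have H123 := cond_face b k c g h a (ltn_neq' _ _ ak) (ltn_neq' _ _ ab) (ltn_neq' _ _ ak) (ltn_neq' _ _ ac).
have H023 := cond_face a k c (leq_trans hab g) h b (ltn_neq' _ _ bk) (gtn_neq' _ _ ab) (ltn_neq' _ _ bk) (ltn_neq' _ _ bc).
have Ht := cond_F2 a c _ _ (@assoc (PB s.+3) a b k c h g hab).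
have Hcoc := @F_assoc _ _ _ YH a b k c hab g h.
exact: (coc_2 HP (u01 := F1x a b hab) (u12 := F1x b k g) (u23 := F1x k c h)
  (u02 := F1x a k (leq_trans hab g)) (u13 := F1x b c (leq_trans g h))
  (u03 := F1x a c (leq_trans hab (leq_trans g h))) (u03' := F1x a c (leq_trans (leq_trans hab g) h))
  (b012 := yc a b k hab g) (b123 := yc b k c g h) (b013 := yc a b c hab (leq_trans g h))
  (b023 := yc a k c (leq_trans hab g) h) Ht Hcoc H012 H123 H023).
Qed.

Lemma coc_case3 (a b c : 'I_s.+3) (hab : a <= b) (hbc : b <= c) :
  a < b -> b < c -> c < k -> CondX a b c hab hbc.
Proof.
move=> ab bc ck.
have h : c <= k by exact: ltnW.
have bk : b < k by exact: ltn_trans bc ck.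
have ak : a < k by exact: ltn_trans ab bk.
have ac : a < c by exact: ltn_trans ab bc.
have H123 := cond_face b c k hbc h a (ltn_neq' _ _ ak) (ltn_neq' _ _ ab) (ltn_neq' _ _ ac) (ltn_neq' _ _ ak).
have H013 := cond_face a b k hab (leq_trans hbc h) c (ltn_neq' _ _ ck) (gtn_neq' _ _ ac) (gtn_neq' _ _ bc) (ltn_neq' _ _ ck).
have H023 := cond_face a c k (leq_trans hab hbc) h b (ltn_neq' _ _ bk) (gtn_neq' _ _ ab) (ltn_neq' _ _ bc) (ltn_neq' _ _ bk).
have Ht := cond_F2 a k _ _ (@assoc (PB s.+3) a b c k h hbc hab).
have Hcoc := @F_assoc _ _ _ YH a b c k hab hbc h.
exact: (coc_3 HP (u01 := F1x a b hab) (u12 := F1x b c hbc) (u23 := F1x c k h)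
  (u02 := F1x a c (leq_trans hab hbc)) (u13 := F1x b k (leq_trans hbc h))
  (u03 := F1x a k (leq_trans hab (leq_trans hbc h))) (u03' := F1x a k (leq_trans (leq_trans hab hbc) h))
  (b012 := yc a b c hab hbc) (b123 := yc b c k hbc h) (b013 := yc a b k hab (leq_trans hbc h))
  (b023 := yc a c k (leq_trans hab hbc) h) Ht Hcoc H123 H013 H023).
Qed.


Lemma Good_refl (i j : 'I_s.+3) (h : i <= j) : Good i j h (Psi i j h) i j h (Psi i j h).
Proof. by split; [exact: (HPsi i j h).1 | ]. Qed.

Lemma Good_ne (a b : 'I_s.+3) (hab : a <= b) (i j : 'I_s.+3) (h : i <= j) :
  (a != i) || (b != j) -> Good a b hab (Psi a b hab) i j h (Psi i j h).
Proof.
move=> H; split; first exact: (HPsi a b hab).1.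
by move=> ea eb; subst; rewrite !eqxx in H.
Qed.

Lemma cond_all (a b c : 'I_s.+3) (hab : a <= b) (hbc : b <= c) : CondX a b c hab hbc.
Proof.
case: (eqVneq a b) => [eab | nab].
  subst b; exact: cond_deg1.
case: (eqVneq b c) => [ebc | nbc].
  subst c; exact: cond_deg2.
have ab : a < b by rewrite ltn_neqAle nab hab.
have bc : b < c by rewrite ltn_neqAle nbc hbc.
have ac : a < c by exact: ltn_trans ab bc.
case: (boolP [exists m, [&& m != k, m != a, m != b & m != c]]) =>
  [/existsP [m /and4P [mk ma mb mc]] | Hno].
  exact: (cond_face a b c hab hbc m mk ma mb mc).
have Hall : forall m : 'I_s.+3, m != k -> [|| m == a, m == b | m == c].
  move=> m mk; move: Hno; rewrite negb_exists => /forallP /(_ m).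
  by rewrite mk /= !negb_and !negbK orbA.
case: (eqVneq k a) => [eka | nka].
  have NF : NoFace b c.
    move=> m mk; case/or3P: (Hall m mk) => [/eqP ema | -> | ->]; rewrite ?orbT //.
    by move: mk; rewrite ema eka eqxx.
  apply: ((HPsi b c hbc).2 NF a b c hab hbc ab bc).
  - apply: Good_ne; by rewrite (ltn_neq' _ _ ab).
  - exact: Good_refl.
  - apply: Good_ne; by rewrite (ltn_neq' _ _ ab).
case: (eqVneq k b) => [ekb | nkb].
  have NF : NoFace a c.
    move=> m mk; case/or3P: (Hall m mk) => [-> | /eqP emb | ->]; rewrite ?orbT //.
    by move: mk; rewrite emb ekb eqxx.
  apply: ((HPsi a c (leq_trans hab hbc)).2 NF a b c hab hbc ab bc).
  - apply: Good_ne; by rewrite (ltn_neq' _ _ bc) orbT.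
  - apply: Good_ne; by rewrite (gtn_neq' _ _ ab).
  - exact: Good_refl.
case: (eqVneq k c) => [ekc | nkc].
  have NF : NoFace a b.
    move=> m mk; case/or3P: (Hall m mk) => [-> | -> | /eqP emc]; rewrite ?orbT //.
    by move: mk; rewrite emc ekc eqxx.
  apply: ((HPsi a b hab).2 NF a b c hab hbc ab bc).
  - exact: Good_refl.
  - apply: Good_ne; by rewrite (gtn_neq' _ _ ab).
  - apply: Good_ne; by rewrite (gtn_neq' _ _ bc) orbT.
case: (ltngtP k a) => [ka | ak | eka]; last by move: nka; rewrite (val_inj eka) eqxx.
  exact: coc_case0.
case: (ltngtP k b) => [kb | bk | ekb]; last by move: nkb; rewrite (val_inj ekb) eqxx.
  exact: coc_case1.
case: (ltngtP k c) => [kc | ck | ekc]; last by move: nkc; rewrite (val_inj ekc) eqxx.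
  exact: coc_case2.
exact: coc_case3.
Qed.


Definition F2x (i j : 'I_s.+3) (f g : @hom (PB s.+3) i j) (a : @cell (PB s.+3) i j f g) :
  ab_cell (F1x i j f) (F1x i j g) := exist _ (y2 i j f g a) (cond_F2 i j f g a).

Definition Fcx (i j l : 'I_s.+3) (f : @hom (PB s.+3) i j) (g : @hom (PB s.+3) j l) :
  ab_cell (ab_comp1 (F1x j l g) (F1x i j f)) (F1x i l (@comp1 (PB s.+3) _ _ _ g f)) :=
  exist _ (yc i j l f g) (cond_all i j l f g).

Definition Fux (i : 'I_s.+3) : ab_cell (ab_id1 A (F0x i)) (F1x i i (leqnn i)) :=
  match esym (ex_norm i (leqnn i)) in _ = g return ab_cell (ab_id1 A (F0x i)) g
  with erefl => ab_id2 _ end.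

Definition X0 : HomData (PB s.+3) E := Build_HomData (PB s.+3) E F0x F1x F2x Fcx Fux.

Lemma proj1_match (q : cob P) (u : ab_hom A q q) (e : u = ab_id1 A q) :
  proj1_sig (match esym e in _ = g return ab_cell (ab_id1 A q) g with erefl => ab_id2 _ end)
  = match esym (f_equal (@projT1 _ _) e) in _ = g return cell (id1 (mom A q)) g with erefl => id2 _ end.
Proof. by subst u. Qed.

Lemma funit_proj (i : 'I_s.+3) : proj1_sig (Fux i) = yu i.
Proof. by rewrite /Fux proj1_match -yu_match. Qed.

Lemma HX0 : isHom X0.
Proof.
split.
- move=> i j f; apply: abc_eq; exact: (@F2_id _ _ _ YH i j f).
- move=> i j f g h b a; apply: abc_eq; exact: (@F2_comp _ _ _ YH i j f g h b a).
- move=> i j l f f' g g' a b; apply: abc_eq; exact: (@Fcomp_nat _ _ _ YH i j l f f' g g' a b).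
- move=> w i j l f g h; apply: abc_eq; exact: (@F_assoc _ _ _ YH w i j l f g h).
- move=> i j f; apply: abc_eq; rewrite /= funit_proj; exact: (@F_lunit _ _ _ YH i j f).
- move=> i j f; apply: abc_eq; rewrite /= funit_proj; exact: (@F_runit _ _ _ YH i j f).
- move=> i j l f g; exact: Ecell_iso.
- move=> i; exact: Ecell_iso.
Qed.

Lemma NX0 : isNormal X0.
Proof. move=> i; by exists (ex_norm i (leqnn i)). Qed.

Lemma projX0 : compH (projH A) X0 = Y.
Proof.
rewrite /compH /projH /X0 /Y /=.
have E1 : (fun (x y z : 'I_s.+3) (f : @hom (PB s.+3) x y) (g : @hom (PB s.+3) y z) =>
    vcomp (proj1_sig (Fcx x y z f g)) (id2 (comp1 (projT1 (F1x y z g)) (projT1 (F1x x y f))))) = yc.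
  do 5 (apply: functional_extensionality_dep => ?); exact: (v_idr BA).
have E2 : (fun x : 'I_s.+3 => vcomp (proj1_sig (Fux x)) (id2 (id1 (mom A (F0x x))))) = yu.
  apply: functional_extensionality_dep => ?; by rewrite (v_idr BA) funit_proj.
by rewrite E1 E2.
Qed.


Lemma E_vidl : forall (x y : ob E) (f g : hom x y) (a : cell f g), vcomp (id2 g) a = a.
Proof. move=> x y f g a; apply: abc_eq; exact: (v_idl BA). Qed.

Lemma F1x_face (j : 'I_s.+3) (hj : j != k) (a b : 'I_s.+2) (h1 : lift j a <= lift j b) (h2 : a <= b) :
  etot (F1x _ _ h1) = tot1 (@F1 _ _ (Hf hrn hj) a b h2).
Proof.
have h' : fi j (lift j a) <= fi j (lift j b) by rewrite !fi_lift.
rewrite /F1x ((HPsi _ _ h1).1 j hj h' (neq_lift _ _) (neq_lift _ _)).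
apply: F1_idx; exact: fi_lift.
Qed.

Lemma faceX0 (j : 'I_s.+3) (hj : j != k) : dface j X0 = Hf hrn hj.
Proof.
apply: hom_ext.
- move=> a /=; by rewrite -(HF0 _ j hj (neq_lift j a)) fi_lift.
- move=> a b h /=; exact: F1x_face.
- move=> a b h1 h2 c /=.
  rewrite (F2_tot HX0) (F2_tot (proj2_sig (hrn j hj)).1).
  apply: tot2_id2; exact: F1x_face.
- move=> a b c f g /=.
  rewrite (vF2_tot HX0 E_vidl).
  apply: tot2E.
  + apply: etot_comp; exact: F1x_face.
  + exact: F1x_face.
  + by rewrite (@CB _ _ _ _ _ _ yN Hp j hj _ _ _ f g).
- move=> a /=.
  rewrite (vF2_tot HX0 E_vidl) (Funit_tot NX0) (Funit_tot (proj2_sig (hrn j hj)).2).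
  apply: tot2_id1 => /=; by rewrite -(HF0 _ j hj (neq_lift j a)) fi_lift.
Qed.

Lemma uniqX0 (X' : HomData (PB s.+3) E) (HX' : isHom X') (NX' : isNormal X') :
  (forall (j : 'I_s.+3) (hj : j != k), dface j X' = Hf hrn hj) -> compH (projH A) X' = Y -> X0 = X'.
Proof.
move=> HF HPr.
have V : forall v, F0x v = F0 X' v.
  move=> v; have [m] := @avoid _ [:: k; v] (ltac:(by [])).
  rewrite !inE negb_or => /andP [mk mv].
  rewrite -(HF0 v m mk mv) -(hp0 (HF m mk) (fi m v)) /= lift_fi //; by rewrite eq_sym.
have P1 : forall i j h, tot1 (projT1 (@F1 _ _ X' i j h)) = tot1 (y1 i j h).
  move=> i j h; exact: (hp1 HPr h).
have Pc : forall i j l f g, tot2 (proj1_sig (@Fcomp _ _ X' i j l f g)) = tot2 (yc i j l f g).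
  move=> i j l f g; have := hpc HPr f g => /=; by rewrite (v_idr BA).
have Eface : forall i j h m (hm : m != k), m != i -> m != j -> etot (F1x i j h) = tot1 (@F1 _ _ X' i j h).
  move=> i j h m hm mi mj.
  have h' : fi m i <= fi m j by apply: fi_mono => //; rewrite eq_sym.
  rewrite /F1x ((HPsi i j h).1 m hm h' mi mj) -(hp1 (HF m hm) h') /=.
  apply: F1_idx; apply: lift_fi; by rewrite eq_sym.
have E1 : forall i j h, etot (F1x i j h) = tot1 (@F1 _ _ X' i j h).
  move=> i j h.
  case: (boolP [exists m, (m != k) && (m != i) && (m != j)]) =>
    [/existsP [m /andP [/andP [mk mi] mj]] | Hno].
    exact: (Eface i j h m mk mi mj).
  have NF : NoFace i j.
    move=> m mk; move: Hno; rewrite negb_exists => /forallP /(_ m).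
    by rewrite mk /= negb_and !negbK.
  have [lt_ij ik jk Hall] := noface_facts i j h NF.
  have [psi Hpsi] := retype (u' := @F1 _ _ X' i j h) (h := y1 i j h) (esym (V i)) (esym (V j)) (P1 i j h).
  suff Eps : Psi i j h = psi by rewrite /F1x Eps.
  have [ki | kj_i] := ltnP k i.
    have hki : k <= i by exact: ltnW.
    have kj : k < j by exact: ltn_trans ki lt_ij.
    have C' : Cond (u := F1x k i hki) (w := mkE psi) (v := F1x k j (leq_trans hki h)) (yc k i j hki h).
      apply: (cond_transfer _ _ _ _ (proj2_sig (@Fcomp _ _ X' _ _ _ hki h))).
      * by rewrite (Eface k i hki j jk (gtn_neq' _ _ kj) (gtn_neq' _ _ lt_ij)).
      * by rewrite Hpsi.
      * by rewrite (Eface k j (leq_trans hki h) i ik (gtn_neq' _ _ ki) (ltn_neq' _ _ lt_ij)).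
      * exact: Pc.
    have Fa := (equiv_faith_full A HP HB (y1 k i hki)).1.
    exact: (uniq12 HP (u01 := F1x k i hki) (u02 := F1x k j (leq_trans hki h)) (h := y1 i j h) (be := yc k i j hki h) (psi := Psi i j h) (psi' := psi) Fa (cond_all k i j hki h) C').
  have ik' : i < k by rewrite ltn_neqAle ik kj_i.
  have [kj | jk'] := ltnP k j.
    have hik : i <= k by exact: ltnW.
    have hkj : k <= j by exact: ltnW.
    move: psi Hpsi; have E := bool_irrelevance h (leq_trans hik hkj); subst h => psi Hpsi.
    have C' : Cond (u := F1x i k hik) (w := F1x k j hkj) (v := mkE psi) (yc i k j hik hkj).
      apply: (cond_transfer _ _ _ _ (proj2_sig (@Fcomp _ _ X' _ _ _ hik hkj))).
      * by rewrite (Eface i k hik j jk (gtn_neq' _ _ lt_ij) (gtn_neq' _ _ kj)).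
      * by rewrite (Eface k j hkj i ik (ltn_neq' _ _ ik') (ltn_neq' _ _ lt_ij)).
      * by rewrite Hpsi.
      * exact: Pc.
    exact: (uniq02 (psi := Psi i j (leq_trans hik hkj)) (psi' := psi) (cond_all i k j hik hkj) C').
  have jk'' : j < k by rewrite ltn_neqAle jk jk'.
  have hjk : j <= k by exact: ltnW.
  have C' : Cond (u := mkE psi) (w := F1x j k hjk) (v := F1x i k (leq_trans h hjk)) (yc i j k h hjk).
    apply: (cond_transfer _ _ _ _ (proj2_sig (@Fcomp _ _ X' _ _ _ h hjk))).
    * by rewrite Hpsi.
    * by rewrite (Eface j k hjk i ik (ltn_neq' _ _ lt_ij) (ltn_neq' _ _ ik')).
    * by rewrite (Eface i k (leq_trans h hjk) j jk (gtn_neq' _ _ lt_ij) (ltn_neq' _ _ jk'')).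
    * exact: Pc.
  exact: (uniq01 HP (psi := Psi i j h) (psi' := psi) (cond_all i j k h hjk) C').
apply: hom_ext.
- exact: V.
- exact: E1.
- move=> i j h1 h2 c.
  rewrite (F2_tot HX0) (F2_tot HX').
  apply: tot2_id2; exact: E1.
- move=> i j l f g.
  apply: tot2E.
  + apply: etot_comp; exact: E1.
  + exact: E1.
  + by rewrite Pc.
- move=> i.
  rewrite (Funit_tot NX0) (Funit_tot NX').
  apply: tot2_id1; exact: V.
Qed.

End WithPsi.

Lemma constr_main : exists! x : Nerve E s.+3,
  (forall (j : 'I_s.+3) (hj : j != k), dface j (proj1_sig x) = proj1_sig (hrn j hj))
  /\ compH (projH A) (proj1_sig x) = Y.
Proof.
have [Psi HPsi] : exists Psi : (forall i j h, Psi_t i j h), forall i j h, Spec i j h (Psi i j h).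
  exists (fun i j h => proj1_sig (constructive_indefinite_description _ (exPsi i j h))).
  move=> i j h; exact: (proj2_sig (constructive_indefinite_description _ (exPsi i j h))).
exists (exist _ (X0 Psi HPsi) (conj (HX0 Psi HPsi) (NX0 Psi HPsi))); split.
  split; [move=> j hj; exact: faceX0 | exact: projX0].
move=> [X' [HX' NX']] /= [HF HPr].
have E := uniqX0 Psi HPsi X' HX' NX' HF HPr; subst X'.
congr exist; apply: proof_irrelevance.
Qed.

End Constr.


Theorem theorem7p1 (B : Bicat) (P : Cat) (A : RightAction B P) :
  isBigroupoid B -> isGroupoid P ->
  forall n : nat, 2 <= n -> exact_fibration_dim (projH A) n.
Proof.
move=> HB HP n; case: n => [|[|s]] // _.
move=> k hrn y Hc Hp.
have HV : forall v : 'I_s.+3, exists p, forall (m : 'I_s.+3) (hm : m != k), m != v -> F0 (Hf hrn hm) (fi m v) = p.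
  move=> v; have [m0] := @avoid _ [:: k; v] (ltac:(by [])).
  rewrite !inE negb_or => /andP [m0k m0v].
  exists (F0 (Hf hrn m0k) (fi m0 v)) => m hm mv.
  by apply: (VC Hc hm m0k); rewrite eq_sym.
pose F0x := fun v => proj1_sig (constructive_indefinite_description _ (HV v)).
have HF0 : forall v m (hm : m != k), m != v -> F0 (Hf hrn hm) (fi m v) = F0x v.
  move=> v; exact: (proj2_sig (constructive_indefinite_description _ (HV v))).
case: y Hp => [[y0 y1 y2 yc yu] [YH YN]] Hp.
have Ey0 : y0 = fun v => mom A (F0x v).
  apply: functional_extensionality => v.
  have [m0] := @avoid _ [:: k; v] (ltac:(by [])).
  rewrite !inE negb_or => /andP [m0k m0v].
  have := @VB _ _ _ _ _ _ _ Hp m0 m0k (fi m0 v).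
  rewrite /= lift_fi; last by rewrite eq_sym.
  move=> <-; by rewrite HF0.
subst y0.
exact: (constr_main B P A HB HP s k hrn F0x y1 y2 yc yu YH YN Hc Hp HF0).
Qed.
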